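(* Let $\beta=(\beta_n)_{n\ge0}$ be a sequence of positive numbers with $\liminf_n\beta_n^{1/n}\ge1$. Then $\mathcal M(H^2(\beta))=H^\infty$ with equivalent norms (i.e. the two sets coincide and there is $C>0$ with $\|h\|_\infty\le\|M_h\|\le C\|h\|_\infty$ for all $h\in H^\infty$) if and only if $\beta$ is essentially decreasing.
   Context: $H^2(\beta)$ is the Hilbert space of analytic functions $f(z)=\sum_{n\ge0}a_nz^n$ on the unit disk $\mathbb D$ with $\|f\|^2=\sum_{n\ge0}|a_n|^2\beta_n<\infty$. $\mathcal M(H^2(\beta))$ is the space of analytic $h$ on $\mathbb D$ with $hf\in H^2(\beta)$ for all $f\in H^2(\beta)$, normed by the operator norm of the multiplication operator $M_hf=hf$; one always has $\|h\|_\infty\le\|M_h\|$. $H^\infty$ is the space of bounded analytic functions on $\mathbb D$ with the sup norm. $\beta$ is essentially decreasing if there is $C\ge1$ with $\beta_m\le C\beta_n$ for all $m\ge n\ge0$. *)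

(* Defs.v *)
From Stdlib Require Import Reals.
From Coquelicot Require Import Coquelicot.
Open Scope R_scope.

(* An analytic function on the unit disk is represented by its Taylor
   coefficient sequence a : nat -> C, with f(z) = sum_n a_n z^n converging
   for every |z| < 1. *)
Definition analytic_disk (a : nat -> C) : Prop :=
  forall z : C, Cmod z < 1 -> ex_series (fun n => (a n * z ^ n)%C).

Definition in_H2 (beta : nat -> R) (a : nat -> C) : Prop :=
  ex_series (fun n => Cmod (a n) ^ 2 * beta n).

Definition H2_norm (beta : nat -> R) (a : nat -> C) : R :=
  sqrt (Series (fun n => Cmod (a n) ^ 2 * beta n)).

(* Taylor coefficients of the product of two analytic functions
   (Cauchy product). *)
Definition cauchy_prod (a b : nat -> C) : nat -> C :=
  fun n => sum_n (fun k => (a k * b (n - k)%nat)%C) n.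

Definition is_multiplier (beta : nat -> R) (h : nat -> C) : Prop :=
  analytic_disk h /\
  forall f, in_H2 beta f -> in_H2 beta (cauchy_prod h f).

Definition mult_norm (beta : nat -> R) (h : nat -> C) : Rbar :=
  Lub_Rbar (fun x => exists f, in_H2 beta f /\ H2_norm beta f <= 1 /\
                               x = H2_norm beta (cauchy_prod h f)).

Definition value_at (h : nat -> C) (z l : C) : Prop :=
  is_series (fun n => (h n * z ^ n)%C) l.

Definition in_Hinf (h : nat -> C) : Prop :=
  analytic_disk h /\
  exists M : R, forall z l, Cmod z < 1 -> value_at h z l -> Cmod l <= M.

Definition sup_norm (h : nat -> C) : Rbar :=
  Lub_Rbar (fun x => exists z l, Cmod z < 1 /\ value_at h z l /\ x = Cmod l).

Definition ess_decreasing (beta : nat -> R) : Prop :=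
  exists C : R, 1 <= C /\ forall m n : nat, (n <= m)%nat -> beta m <= C * beta n.

(* Main.v *)
Require Import Defs.
From Stdlib Require Import Reals Lra Lia Psatz FunctionalExtensionality Arith ClassicalEpsilon Classical.
From Coquelicot Require Import Coquelicot.
Open Scope R_scope.

Lemma is_series_finite {K : AbsRing} {V : NormedModule K} (a : nat -> V) N :
  (forall k, (N < k)%nat -> a k = zero) -> is_series a (sum_n a N).
Proof.
  intros H. unfold is_series.
  apply filterlim_ext_loc with (fun _ => sum_n a N).
  - exists N. intros n Hn. induction Hn. reflexivity.
    rewrite sum_Sn, H by lia. rewrite plus_zero_r. auto.
  - apply filterlim_const.
Qed.

Lemma Re_sum_n (a : nat -> C) n : Re (sum_n a n) = sum_n (fun k => Re (a k)) n.
Proof.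
  induction n. rewrite !sum_O; auto.
  rewrite !sum_Sn, <- IHn. reflexivity.
Qed.
Lemma Im_sum_n (a : nat -> C) n : Im (sum_n a n) = sum_n (fun k => Im (a k)) n.
Proof.
  induction n. rewrite !sum_O; auto.
  rewrite !sum_Sn, <- IHn. reflexivity.
Qed.

Lemma is_series_C_parts (a : nat -> C) lr li :
  is_series (fun n => Re (a n)) lr -> is_series (fun n => Im (a n)) li -> is_series a (lr, li).
Proof.
  unfold is_series. intros H1 H2.
  apply filterlim_locally. intros eps.
  destruct (proj1 (filterlim_locally _ _) H1 eps) as [N1 H1'].
  destruct (proj1 (filterlim_locally _ _) H2 eps) as [N2 H2']. exists (max N1 N2).
  intros n Hn. split; simpl.
  - pose proof (H1' n ltac:(lia)) as Hb. rewrite <- Re_sum_n in Hb. exact Hb.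
  - pose proof (H2' n ltac:(lia)) as Hb. rewrite <- Im_sum_n in Hb. exact Hb.
Qed.

Lemma is_series_C_Re (a : nat -> C) l :
  is_series a l -> is_series (fun n => Re (a n)) (Re l).
Proof.
  unfold is_series. intros H.
  apply filterlim_locally. intros eps.
  destruct (proj1 (filterlim_locally _ _) H eps) as [N H']. exists N. intros n Hn.
  rewrite <- Re_sum_n. apply (H' n Hn).
Qed.
Lemma is_series_C_Im (a : nat -> C) l :
  is_series a l -> is_series (fun n => Im (a n)) (Im l).
Proof.
  unfold is_series. intros H.
  apply filterlim_locally. intros eps.
  destruct (proj1 (filterlim_locally _ _) H eps) as [N H']. exists N. intros n Hn.
  rewrite <- Im_sum_n. apply (H' n Hn).
Qed.

Lemma Re_mult (x y : C) : Re (x * y)%C = Re x * Re y - Im x * Im y.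
Proof. destruct x, y; simpl; ring. Qed.
Lemma Im_mult (x y : C) : Im (x * y)%C = Re x * Im y + Im x * Re y.
Proof. destruct x, y; simpl; ring. Qed.

Lemma im_le_Cmod (c : C) : Rabs (Im c) <= Cmod c.
Proof.
  destruct c as [x y]. unfold Cmod; simpl.
  rewrite <- sqrt_Rsqr_abs. apply sqrt_le_1_alt. unfold Rsqr. nra.
Qed.
Lemma re_le_Cmod' (c : C) : Rabs (Re c) <= Cmod c.
Proof. apply re_le_Cmod. Qed.

Lemma ex_series_part_abs (a : nat -> C) (p : C -> R) :
  (forall c, Rabs (p c) <= Cmod c) ->
  ex_series (fun n => Cmod (a n)) -> ex_series (fun n => Rabs (p (a n))).
Proof.
  intros Hp H. apply (ex_series_le (fun n => Rabs (p (a n))) (fun n => Cmod (a n))); auto.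
  intros n. unfold norm; simpl. unfold abs; simpl. rewrite Rabs_Rabsolu. apply Hp.
Qed.

Lemma is_series_Cmult (a b : nat -> C) la lb :
  is_series a la -> is_series b lb ->
  ex_series (fun n => Cmod (a n)) -> ex_series (fun n => Cmod (b n)) ->
  is_series (fun n => sum_n (fun k => (a k * b (n - k)%nat)%C) n) (la * lb)%C.
Proof.
  intros Ha Hb Aa Ab.
  pose proof (is_series_C_Re _ _ Ha) as Ra. pose proof (is_series_C_Im _ _ Ha) as Ia.
  pose proof (is_series_C_Re _ _ Hb) as Rb. pose proof (is_series_C_Im _ _ Hb) as Ib.
  pose proof (ex_series_part_abs a Re re_le_Cmod Aa) as ARa.
  pose proof (ex_series_part_abs a Im im_le_Cmod Aa) as AIa.
  pose proof (ex_series_part_abs b Re re_le_Cmod Ab) as ARb.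
  pose proof (ex_series_part_abs b Im im_le_Cmod Ab) as AIb.
  pose proof (is_series_mult _ _ _ _ Ra Rb ARa ARb) as P1.
  pose proof (is_series_mult _ _ _ _ Ia Ib AIa AIb) as P2.
  pose proof (is_series_mult _ _ _ _ Ra Ib ARa AIb) as P3.
  pose proof (is_series_mult _ _ _ _ Ia Rb AIa ARb) as P4.
  replace (la * lb)%C with (Re la * Re lb - Im la * Im lb, Re la * Im lb + Im la * Re lb).
  2:{ destruct la, lb; unfold Cmult; simpl; reflexivity. }
  apply is_series_C_parts.
  - replace (Re la * Re lb - Im la * Im lb) with (plus (Re la * Re lb) (scal (-1) (Im la * Im lb))).
    2:{ unfold plus, scal; simpl; unfold mult; simpl; ring. }
    apply is_series_ext with (fun n => plus (sum_f_R0 (fun k => Re (a k) * Re (b (n - k)%nat)) n)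
        (scal (-1) (sum_f_R0 (fun k => Im (a k) * Im (b (n - k)%nat)) n))).
    + intros n. rewrite Re_sum_n, sum_n_Reals.
      transitivity (sum_f_R0 (fun i => Re (a i) * Re (b (n-i)%nat) - Im (a i) * Im (b (n-i)%nat)) n).
      * rewrite minus_sum. unfold plus, scal; simpl; unfold mult; simpl; ring.
      * apply sum_eq. intros i _. rewrite Re_mult. ring.
    + apply (is_series_plus _ _ _ _ P1).
      apply (is_series_scal_l (-1) _ _ P2).
  - replace (Re la * Im lb + Im la * Re lb) with (plus (Re la * Im lb) (Im la * Re lb)) by reflexivity.
    apply is_series_ext with (fun n => plus (sum_f_R0 (fun k => Re (a k) * Im (b (n - k)%nat)) n)
        (sum_f_R0 (fun k => Im (a k) * Re (b (n - k)%nat)) n)).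
    + intros n. rewrite Im_sum_n, sum_n_Reals.
      transitivity (sum_f_R0 (fun i => Re (a i) * Im (b (n-i)%nat) + Im (a i) * Re (b (n-i)%nat)) n).
      * rewrite plus_sum. reflexivity.
      * apply sum_eq. intros i _. rewrite Im_mult. ring.
    + apply (is_series_plus _ _ _ _ P3 P4).
Qed.

Lemma sum_n_le_loc (a b : nat -> R) N :
  (forall n, (n <= N)%nat -> a n <= b n) -> sum_n a N <= sum_n b N.
Proof.
  induction N; intros H.
  - rewrite !sum_O. apply H; lia.
  - rewrite !sum_Sn. unfold plus; simpl. pose proof (H (S N) ltac:(lia)).
    assert (sum_n a N <= sum_n b N) by (apply IHN; intros; apply H; lia). lra.
Qed.

Lemma sum_n_nonneg (a : nat -> R) N :
  (forall n, 0 <= a n) -> 0 <= sum_n a N.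
Proof.
  intros H. induction N. rewrite sum_O; auto.
  rewrite sum_Sn. unfold plus; simpl. pose proof (H (S N)). lra.
Qed.

Lemma sum_n_mono (a : nat -> R) N M :
  (forall n, 0 <= a n) -> (N <= M)%nat -> sum_n a N <= sum_n a M.
Proof.
  intros H HNM. induction HNM. lra.
  rewrite sum_Sn. unfold plus; simpl. pose proof (H (S m)). lra.
Qed.

Lemma psum_le_series (a : nat -> R) N :
  (forall n, 0 <= a n) -> ex_series a -> sum_n a N <= Series a.
Proof.
  intros H E. apply Series_correct in E.
  apply (is_lim_seq_incr_compare (sum_n a)). exact E.
  intros n. rewrite sum_Sn. unfold plus; simpl. pose proof (H (S n)). lra.
Qed.

Lemma series_bounded (a : nat -> R) M :
  (forall n, 0 <= a n) -> (forall N, sum_n a N <= M) -> ex_series a /\ Series a <= M.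
Proof.
  intros H HM.
  assert (Hinc : forall n, sum_n a n <= sum_n a (S n)).
  { intros n. rewrite sum_Sn. unfold plus; simpl. pose proof (H (S n)). lra. }
  pose proof (ex_finite_lim_seq_incr _ M Hinc HM) as [l Hl].
  assert (E : ex_series a) by (exists l; exact Hl).
  split; auto.
  unfold Series. rewrite (is_lim_seq_unique _ _ Hl).
  pose proof (is_lim_seq_le _ (fun _ => M) l M HM Hl (is_lim_seq_const M)). simpl in H0. exact H0.
Qed.

Lemma Series_le' (a b : nat -> R) :
  (forall n, 0 <= a n <= b n) -> ex_series b -> ex_series a /\ Series a <= Series b.
Proof.
  intros H E. apply series_bounded.
  intros n; apply H.
  intros N. eapply Rle_trans. apply sum_n_le_loc. intros n _; apply (H n).
  apply psum_le_series; auto. intros n; pose proof (H n); lra.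
Qed.

Lemma Series_nonneg (a : nat -> R) : (forall n, 0 <= a n) -> ex_series a -> 0 <= Series a.
Proof.
  intros H E. eapply Rle_trans. apply (sum_n_nonneg a 0 H). apply psum_le_series; auto.
Qed.

Lemma Cmod_sum_n_le (a : nat -> C) N :
  Cmod (sum_n a N) <= sum_n (fun n => Cmod (a n)) N.
Proof.
  induction N. rewrite !sum_O; lra.
  rewrite !sum_Sn. unfold plus at 2; simpl.
  eapply Rle_trans. apply Cmod_triangle. lra.
Qed.

Lemma Cmod_series_le (a : nat -> C) l :
  is_series a l -> ex_series (fun n => Cmod (a n)) -> Cmod l <= Series (fun n => Cmod (a n)).
Proof.
  intros H E. apply Series_correct in E.
  assert (L : is_lim_seq (fun n => Cmod (sum_n a n)) (Cmod l)).
  { unfold is_lim_seq. simpl.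
    apply filterlim_ext with (fun n => norm (sum_n a n)).
    intros n. reflexivity.
    apply filterlim_comp with (locally l). exact H. apply (filterlim_norm (V := C_NormedModule)). }
  pose proof (is_lim_seq_le _ _ _ _ (Cmod_sum_n_le a) L (E : is_lim_seq _ (Finite _))). simpl in H0. exact H0.
Qed.

Lemma pow_le_1 x n : 0 <= x <= 1 -> x ^ n <= 1.
Proof. intros H. rewrite <- (pow1 n). apply pow_incr. lra. Qed.

Lemma sum_n_zero {G : AbelianMonoid} (a : nat -> G) N :
  (forall k, (k <= N)%nat -> a k = zero) -> sum_n a N = zero.
Proof.
  induction N; intros H. rewrite sum_O; apply H; lia.
  rewrite sum_Sn, IHN, H by (intros; apply H; lia) || lia. rewrite plus_zero_l. reflexivity.
Qed.

Lemma sum_n_single {G : AbelianMonoid} (a : nat -> G) j N :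
  (forall k, k <> j -> a k = zero) -> (j <= N)%nat -> sum_n a N = a j.
Proof.
  intros H HjN. induction HjN.
  - destruct j. rewrite sum_O; auto.
    rewrite sum_Sn, sum_n_zero. rewrite plus_zero_l; auto.
    intros k Hk; apply H; lia.
  - rewrite sum_Sn, IHHjN, (H (S m)) by lia. apply plus_zero_r.
Qed.

Lemma is_series_single {K : AbsRing} {V : NormedModule K} (a : nat -> V) j :
  (forall k, k <> j -> a k = zero) -> is_series a (a j).
Proof.
  intros H. rewrite <- (sum_n_single a j j H) by lia.
  apply is_series_finite. intros k Hk; apply H; lia.
Qed.

Lemma C_ext (x y : C) : Re x = Re y -> Im x = Im y -> x = y.
Proof. destruct x, y; simpl; intros; subst; auto. Qed.

Lemma is_series_C_unique (a : nat -> C) l1 l2 : is_series a l1 -> is_series a l2 -> l1 = l2.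
Proof.
  intros H1 H2. apply C_ext.
  - pose proof (is_series_unique _ _ (is_series_C_Re _ _ H1)).
    pose proof (is_series_unique _ _ (is_series_C_Re _ _ H2)). congruence.
  - pose proof (is_series_unique _ _ (is_series_C_Im _ _ H1)).
    pose proof (is_series_unique _ _ (is_series_C_Im _ _ H2)). congruence.
Qed.

Definition mono (m : nat) : nat -> C := fun k => if Nat.eqb k m then 1%C else 0%C.

Lemma mono_value m z : value_at (mono m) z (z ^ m)%C.
Proof.
  unfold value_at.
  replace (z ^ m)%C with (mono m m * z ^ m)%C.
  2:{ unfold mono. rewrite Nat.eqb_refl. apply Cmult_1_l. }
  apply (is_series_single (fun n => (mono m n * z ^ n)%C) m).
  intros k Hk. unfold mono. apply Nat.eqb_neq in Hk. rewrite Hk. apply Cmult_0_l.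
Qed.

Lemma mono_Hinf m : in_Hinf (mono m).
Proof.
  split.
  - intros z _. eexists. apply mono_value.
  - exists 1. intros z l Hz Hl.
    rewrite (is_series_C_unique _ _ _ Hl (mono_value m z)).
    rewrite Cmod_pow. apply pow_le_1. split; [apply Cmod_ge_0| lra].
Qed.

Lemma mono_sup m : Rbar_le (sup_norm (mono m)) 1.
Proof.
  unfold sup_norm. destruct (Lub_Rbar_correct
    (fun x => exists z l, Cmod z < 1 /\ value_at (mono m) z l /\ x = Cmod l)) as [_ Hl].
  apply Hl. intros x [z [l [Hz [Hv ->]]]]. simpl.
  rewrite (is_series_C_unique _ _ _ Hv (mono_value m z)).
  rewrite Cmod_pow. apply pow_le_1. split; [apply Cmod_ge_0| lra].
Qed.

Definition spike (n : nat) (c : R) : nat -> C := fun k => if Nat.eqb k n then RtoC c else 0%C.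

Lemma spike_norm beta n c :
  in_H2 beta (spike n c) /\ Series (fun k => Cmod (spike n c k) ^ 2 * beta k) = c ^ 2 * beta n.
Proof.
  assert (H : is_series (fun k => Cmod (spike n c k) ^ 2 * beta k) (c ^ 2 * beta n)).
  { replace (c ^ 2 * beta n) with (Cmod (spike n c n) ^ 2 * beta n).
    2:{ unfold spike. rewrite Nat.eqb_refl, Cmod_R. rewrite pow2_abs. reflexivity. }
    apply (is_series_single (fun k => Cmod (spike n c k) ^ 2 * beta k) n).
    intros k Hk. unfold spike. apply Nat.eqb_neq in Hk. rewrite Hk, Cmod_0. simpl. unfold zero; simpl. ring. }
  split. eexists; exact H. apply is_series_unique; exact H.
Qed.

Lemma prod_mono_spike m n c : cauchy_prod (mono m) (spike n c) = spike (n + m) c.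
Proof.
  apply functional_extensionality. intros k. unfold cauchy_prod.
  destruct (le_lt_dec m k) as [Hmk|Hmk].
  - rewrite (sum_n_single _ m k); auto.
    + unfold mono, spike. rewrite Nat.eqb_refl, Cmult_1_l.
      destruct (Nat.eqb_spec (k - m) n); destruct (Nat.eqb_spec k (n + m)); auto; lia.
    + intros j Hj. unfold mono. apply Nat.eqb_neq in Hj. rewrite Hj. apply Cmult_0_l.
  - rewrite sum_n_zero.
    + unfold spike. destruct (Nat.eqb_spec k (n + m)); [lia|]. reflexivity.
    + intros j Hj. unfold mono. destruct (Nat.eqb_spec j m); [lia|]. apply Cmult_0_l.
Qed.

Lemma mult_norm_ub beta h f :
  in_H2 beta f -> H2_norm beta f <= 1 ->
  Rbar_le (H2_norm beta (cauchy_prod h f)) (mult_norm beta h).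
Proof.
  intros Hf Hn. unfold mult_norm.
  destruct (Lub_Rbar_correct (fun x => exists f, in_H2 beta f /\ H2_norm beta f <= 1 /\
                               x = H2_norm beta (cauchy_prod h f))) as [Hub _].
  apply Hub. exists f; auto.
Qed.

Lemma dirA beta (hpos : forall n, 0 < beta n) :
  (exists Cst : R, 0 < Cst /\
     forall h : nat -> C, in_Hinf h ->
       Rbar_le (sup_norm h) (mult_norm beta h) /\
       Rbar_le (mult_norm beta h) (Rbar_mult (Finite Cst) (sup_norm h))) ->
  ess_decreasing beta.
Proof.
  intros [Cst [HC H]].
  exists (Rmax 1 (Cst ^ 2)). split. apply Rmax_l.
  intros m n Hnm.
  set (d := (m - n)%nat). set (c := / sqrt (beta n)).
  assert (Hsb : 0 < sqrt (beta n)) by (apply sqrt_lt_R0; auto).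
  assert (Hc2 : c ^ 2 * beta n = 1).
  { unfold c. rewrite <- Rinv_pow by lra. rewrite pow2_sqrt by (specialize (hpos n); lra).
    field. specialize (hpos n); lra. }
  destruct (spike_norm beta n c) as [Hin Hs].
  assert (Hn1 : H2_norm beta (spike n c) <= 1).
  { unfold H2_norm. rewrite Hs, Hc2, sqrt_1. lra. }
  pose proof (mult_norm_ub beta (mono d) _ Hin Hn1) as Hx.
  destruct (H (mono d) (mono_Hinf d)) as [_ Hm].
  pose proof (mono_sup d) as Hs1.
  rewrite prod_mono_spike in Hx.
  unfold H2_norm in Hx. destruct (spike_norm beta (n + d) c) as [_ Hs2]. rewrite Hs2 in Hx.
  replace (n + d)%nat with m in Hx by (unfold d; lia).
  assert (Hle : sqrt (c ^ 2 * beta m) <= Cst).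
  { destruct (sup_norm (mono d)) as [s| |] eqn:Es; simpl in Hs1; try contradiction.
    - pose proof (Rbar_le_trans _ _ _ Hx Hm) as T. simpl in T.
      assert (0 <= s \/ s < 0) by lra.
      eapply Rle_trans. exact T. nra.
    - pose proof (Rbar_le_trans _ _ _ Hx Hm) as T. simpl in T.
      unfold Rbar_mult in T. simpl in T.
      destruct (Rle_dec 0 Cst); [|lra]. destruct (Rle_lt_or_eq_dec 0 Cst r); [|lra]. contradiction. }
  assert (Hq : c ^ 2 * beta m <= Cst ^ 2).
  { rewrite <- (pow2_sqrt (c ^ 2 * beta m)). apply pow_incr. split; [apply sqrt_pos|exact Hle].
    specialize (hpos m). nra. }
  assert (beta m <= Cst ^ 2 * beta n).
  { replace (beta m) with (c ^ 2 * beta m * beta n).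
    apply Rmult_le_compat_r. specialize (hpos n); lra. exact Hq.
    rewrite Rmult_assoc, (Rmult_comm (beta m)), <- Rmult_assoc, Hc2. ring. }
  eapply Rle_trans. exact H0. apply Rmult_le_compat_r. specialize (hpos n); lra. apply Rmax_r.
Qed.

Lemma pow_lt_compat' a b n : 0 <= a < b -> (1 <= n)%nat -> a ^ n < b ^ n.
Proof.
  intros Hab Hn. induction Hn. simpl. lra.
  simpl. assert (0 <= a ^ m) by (apply pow_le; lra). nra.
Qed.

Lemma eventually_beta_ge beta (hpos : forall n, 0 < beta n)
  (hliminf : Rbar_le (Finite 1) (LimInf_seq (fun n => Rpower (beta n) (/ INR n)))) rho :
  0 < rho < 1 -> exists N, forall n, (N <= n)%nat -> rho ^ n < beta n.
Proof.
  intros Hr.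
  set (u := fun n => Rpower (beta n) (/ INR n)).
  assert (HN : exists N, forall n, (N <= n)%nat -> rho < u n).
  { destruct (ex_LimInf_seq u) as [l' HL]. fold u in hliminf.
    rewrite (is_LimInf_seq_unique _ _ HL) in hliminf.
    destruct l' as [l| |]; simpl in hliminf.
    - assert (He : 0 < 1 - rho) by lra.
      destruct (HL (mkposreal _ He)) as [_ [N HN]]. exists N. intros n Hn.
      specialize (HN n Hn). simpl in HN. lra.
    - destruct (HL rho) as [N HN]. exists N; auto.
    - contradiction. }
  destruct HN as [N HN]. exists (S N). intros n Hn.
  assert (Hu : u n ^ n = beta n).
  { unfold u. rewrite <- Rpower_pow by (apply exp_pos).
    rewrite Rpower_mult. rewrite Rinv_l by (apply not_0_INR; lia). apply Rpower_1. auto. }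
  rewrite <- Hu. apply pow_lt_compat'. split. lra. apply HN; lia. lia.
Qed.

Lemma kernel_summable beta (hpos : forall n, 0 < beta n)
  (hliminf : Rbar_le (Finite 1) (LimInf_seq (fun n => Rpower (beta n) (/ INR n)))) x :
  0 <= x < 1 -> ex_series (fun n => x ^ n / beta n).
Proof.
  intros Hx. set (rho := (1 + x) / 2).
  destruct (eventually_beta_ge beta hpos hliminf rho) as [N HN]. unfold rho; lra.
  apply (ex_series_incr_n _ N).
  apply (ex_series_le (fun k => x ^ (N + k) / beta (N + k)%nat) (fun k => (x / rho) ^ (N + k))).
  - intros k. unfold norm; simpl. unfold abs; simpl.
    assert (Hb : 0 < beta (N + k)%nat) by auto.
    assert (Hr : 0 < rho ^ (N + k)) by (apply pow_lt; unfold rho; lra).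
    assert (Hx' : 0 <= x ^ (N + k)) by (apply pow_le; lra).
    rewrite Rabs_pos_eq by (apply Rmult_le_pos; [auto| left; apply Rinv_0_lt_compat; auto]).
    unfold Rdiv. rewrite Rpow_mult_distr, pow_inv.
    apply Rmult_le_compat_l; auto.
    apply Rinv_le_contravar; auto. left. apply HN; lia.
  - apply (ex_series_incr_n (fun k => (x / rho) ^ k) N).
    apply ex_series_geom. rewrite Rabs_pos_eq. apply Rmult_lt_reg_r with rho. unfold rho; lra.
    unfold Rdiv. rewrite Rmult_assoc, Rinv_l by (unfold rho; lra). unfold rho. lra.
    unfold Rdiv. apply Rmult_le_pos. lra. left; apply Rinv_0_lt_compat; unfold rho; lra.
Qed.

Lemma Cmod_mult_pow (a z : C) n : Cmod (a * z ^ n)%C = Cmod a * Cmod z ^ n.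
Proof. rewrite Cmod_mult, Cmod_pow. reflexivity. Qed.

Lemma series_terms_bounded (a : nat -> C) : ex_series a -> exists M, forall n, Cmod (a n) <= M.
Proof.
  intros [l Hl]. destruct (filterlim_bounded (sum_n a)) as [M HM].
  exists l; exact Hl.
  exists (2 * M). intros n. destruct n.
  - pose proof (HM 0%nat). rewrite sum_O in H. change (Cmod (a 0%nat) <= M) in H.
    assert (0 <= M) by (eapply Rle_trans; [apply Cmod_ge_0| exact H]). lra.
  - pose proof (HM (S n)) as H1. pose proof (HM n) as H2. rewrite sum_Sn in H1.
    change (Cmod (sum_n a n + a (S n))%C <= M) in H1. change (Cmod (sum_n a n) <= M) in H2.
    replace (a (S n)) with ((sum_n a n + a (S n)) - sum_n a n)%C by ring.
    eapply Rle_trans. unfold Cminus. apply Cmod_triangle. rewrite Cmod_opp. lra.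
Qed.

Lemma analytic_abs h z : analytic_disk h -> Cmod z < 1 ->
  ex_series (fun n => Cmod (h n) * Cmod z ^ n).
Proof.
  intros Ha Hz. set (r := (1 + Cmod z) / 2).
  pose proof (Cmod_ge_0 z) as Hz0.
  assert (Hr : Cmod (RtoC r) < 1) by (rewrite Cmod_R, Rabs_pos_eq; unfold r; lra).
  destruct (series_terms_bounded _ (Ha _ Hr)) as [M HM].
  apply (ex_series_le (fun n => Cmod (h n) * Cmod z ^ n) (fun n => M * (Cmod z / r) ^ n)).
  - intros n. unfold norm; simpl; unfold abs; simpl.
    rewrite Rabs_pos_eq by (apply Rmult_le_pos; [apply Cmod_ge_0| apply pow_le; auto]).
    specialize (HM n). rewrite Cmod_mult_pow, Cmod_R, Rabs_pos_eq in HM by (unfold r; lra).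
    assert (Hrp : 0 < r ^ n) by (apply pow_lt; unfold r; lra).
    unfold Rdiv. rewrite Rpow_mult_distr, pow_inv.
    apply Rmult_le_reg_r with (r ^ n); auto.
    replace (M * (Cmod z ^ n * / r ^ n) * r ^ n) with (M * Cmod z ^ n) by (field; lra).
    replace (Cmod (h n) * Cmod z ^ n * r ^ n) with (Cmod (h n) * r ^ n * Cmod z ^ n) by ring.
    apply Rmult_le_compat_r. apply pow_le; auto. exact HM.
  - apply (ex_series_scal_l (V := R_NormedModule) M (fun n => (Cmod z / r) ^ n)).
    apply ex_series_geom. rewrite Rabs_pos_eq.
    apply Rmult_lt_reg_r with r. unfold r; lra.
    unfold Rdiv. rewrite Rmult_assoc, Rinv_l by (unfold r; lra). unfold r; lra.
    unfold Rdiv. apply Rmult_le_pos; auto. left; apply Rinv_0_lt_compat; unfold r; lra.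
Qed.

Lemma is_series_RtoC (a : nat -> R) l : is_series a l -> is_series (fun n => RtoC (a n)) (RtoC l).
Proof.
  intros H. apply is_series_C_parts; simpl. exact H.
  pose proof (is_series_finite (K := R_AbsRing) (V := R_NormedModule) (fun _ : nat => 0) 0 (fun _ _ => eq_refl)) as Z.
  rewrite sum_O in Z. exact Z.
Qed.

Lemma cauchy_term (h g : nat -> C) z n :
  (cauchy_prod h g n * z ^ n)%C = sum_n (fun k => ((h k * z ^ k) * (g (n - k)%nat * z ^ (n - k)))%C) n.
Proof.
  unfold cauchy_prod. rewrite <- (sum_n_mult_r (K := C_Ring)).
  apply sum_n_ext_loc. intros k Hk. unfold mult; simpl.
  replace (z ^ n)%C with (z ^ k * z ^ (n - k))%C.
  ring. rewrite <- Cpow_add_r. f_equal. lia.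
Qed.

Lemma prod_value h g z lh lg :
  value_at h z lh -> value_at g z lg ->
  ex_series (fun n => Cmod (h n) * Cmod z ^ n) -> ex_series (fun n => Cmod (g n) * Cmod z ^ n) ->
  value_at (cauchy_prod h g) z (lh * lg)%C.
Proof.
  intros Hh Hg Ah Ag. unfold value_at.
  apply is_series_ext with (fun n => sum_n (fun k => ((h k * z ^ k) * (g (n - k)%nat * z ^ (n - k)))%C) n).
  intros n; symmetry; apply cauchy_term.
  apply (is_series_Cmult (fun n => (h n * z ^ n)%C) (fun n => (g n * z ^ n)%C)); auto.
  - eapply ex_series_ext; [|exact Ah]. intros n; simpl. symmetry; apply Cmod_mult_pow.
  - eapply ex_series_ext; [|exact Ag]. intros n; simpl. symmetry; apply Cmod_mult_pow.
Qed.

Lemma amgm_series (a b : nat -> R) t : 0 < t ->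
  (forall n, 0 <= a n) -> (forall n, 0 <= b n) ->
  ex_series (fun n => a n ^ 2) -> ex_series (fun n => b n ^ 2) ->
  ex_series (fun n => a n * b n) /\
  Series (fun n => a n * b n) <= (t * Series (fun n => a n ^ 2) + Series (fun n => b n ^ 2) / t) / 2.
Proof.
  intros Ht Ha Hb Ea Eb.
  set (c := fun n => (t * a n ^ 2 + b n ^ 2 / t) / 2).
  assert (Hc : is_series c ((t * Series (fun n => a n ^ 2) + Series (fun n => b n ^ 2) / t) / 2)).
  { unfold c. apply (is_series_ext (fun n => scal (/2) (plus (scal t (a n ^ 2)) (scal (/t) (b n ^ 2))))).
    intros n. unfold scal, plus; simpl; unfold mult; simpl. field. lra.
    replace ((t * Series (fun n => a n ^ 2) + Series (fun n => b n ^ 2) / t) / 2) with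
      (scal (/2) (plus (scal t (Series (fun n => a n ^ 2))) (scal (/t) (Series (fun n => b n ^ 2))))).
    2:{ unfold scal, plus; simpl; unfold mult; simpl. field. lra. }
    apply (is_series_scal_l (K:=R_AbsRing) (V:=R_NormedModule)).
    apply (is_series_plus (K:=R_AbsRing) (V:=R_NormedModule));
      apply (is_series_scal_l (K:=R_AbsRing) (V:=R_NormedModule)); apply Series_correct; auto. }
  assert (Hle : forall n, 0 <= a n * b n <= c n).
  { intros n. split. apply Rmult_le_pos; auto. unfold c.
    assert (0 <= (t * a n - b n) ^ 2 / t) by (apply Rmult_le_pos; [apply pow2_ge_0| left; apply Rinv_0_lt_compat; auto]).
    replace ((t * a n ^ 2 + b n ^ 2 / t) / 2) with (a n * b n + (t * a n - b n) ^ 2 / t / 2) by (field; lra).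
    lra. }
  destruct (Series_le' _ _ Hle (ex_intro _ _ Hc)) as [E S].
  split; auto. rewrite (is_series_unique _ _ Hc) in S. exact S.
Qed.

Ltac fs := field; repeat split; try lra.

Lemma pow_sq_swap x n : (x ^ n) ^ 2 = (x ^ 2) ^ n.
Proof. rewrite <- !pow_mult. f_equal. lia. Qed.

Lemma sup_bound beta (hpos : forall n, 0 < beta n)
  (hliminf : Rbar_le (Finite 1) (LimInf_seq (fun n => Rpower (beta n) (/ INR n)))) h M :
  analytic_disk h -> 0 < M ->
  (forall f, in_H2 beta f -> Series (fun n => Cmod (f n) ^ 2 * beta n) <= 1 ->
     in_H2 beta (cauchy_prod h f) /\
     Series (fun n => Cmod (cauchy_prod h f n) ^ 2 * beta n) <= M ^ 2) ->
  forall z l, Cmod z < 1 -> value_at h z l -> Cmod l <= M.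
Proof.
  intros Ha HM Hm z l Hz Hl.
  set (x := Cmod z). set (q := x ^ 2).
  assert (Hx : 0 <= x < 1) by (split; [apply Cmod_ge_0| exact Hz]).
  assert (Hq : 0 <= q < 1) by (unfold q; simpl; split; nra).
  pose proof (kernel_summable beta hpos hliminf q Hq) as EK.
  assert (Hqb : forall n, 0 <= q ^ n / beta n).
  { intros n. unfold Rdiv. apply Rmult_le_pos. apply pow_le; lra. left; apply Rinv_0_lt_compat; auto. }
  set (K := Series (fun n => q ^ n / beta n)).
  assert (HK : 0 < K).
  { apply Rlt_le_trans with (sum_n (fun n => q ^ n / beta n) 0).
    rewrite sum_O. simpl. unfold Rdiv; rewrite Rmult_1_l. apply Rinv_0_lt_compat; auto.
    apply psum_le_series; auto. }
  set (s := sqrt K). assert (Hs : 0 < s) by (apply sqrt_lt_R0; auto).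
  assert (HsK : s * s = K) by (apply sqrt_sqrt; lra).
  set (k := fun n => (Cconj z ^ n * RtoC (/ beta n / s))%C).
  assert (Hkm : forall n, Cmod (k n) = x ^ n / beta n / s).
  { intros n. unfold k. rewrite Cmod_mult, Cmod_pow, Cmod_conj, Cmod_R. fold x.
    pose proof (hpos n). rewrite Rabs_pos_eq. fs.
    unfold Rdiv. apply Rmult_le_pos; left; apply Rinv_0_lt_compat; auto. }
  assert (Hk2 : forall n, Cmod (k n) ^ 2 * beta n = q ^ n / beta n * / K).
  { intros n. rewrite Hkm. unfold q. rewrite <- pow_sq_swap. rewrite <- HsK.
    pose proof (hpos n). fs. }
  assert (Ek : is_series (fun n => Cmod (k n) ^ 2 * beta n) (K * / K)).
  { eapply is_series_ext. intros n; symmetry; apply Hk2.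
    apply is_series_scal_r. apply Series_correct; auto. }
  assert (Hkin : in_H2 beta k) by (eexists; exact Ek).
  assert (Hk1 : Series (fun n => Cmod (k n) ^ 2 * beta n) <= 1).
  { rewrite (is_series_unique _ _ Ek). rewrite Rinv_r by lra. lra. }
  destruct (Hm k Hkin Hk1) as [Hck Hcn].
  assert (Hkz : forall n, (k n * z ^ n)%C = RtoC (q ^ n / beta n / s)).
  { intros n. unfold k.
    replace (Cconj z ^ n * RtoC (/ beta n / s) * z ^ n)%C with ((z * Cconj z) ^ n * RtoC (/ beta n / s))%C.
    2:{ rewrite Cpow_mult_l. ring. }
    rewrite <- Cmod2_conj. fold x. rewrite <- RtoC_pow. rewrite <- RtoC_mult. f_equal.
    unfold q. pose proof (hpos n). fs. }
  assert (Vk : value_at k z (RtoC s)).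
  { unfold value_at. 
    assert (E : RtoC s = RtoC (K * / s)) by (f_equal; rewrite <- HsK; field; lra).
    rewrite E. eapply is_series_ext. intros n; symmetry; apply Hkz.
    apply is_series_RtoC. apply (is_series_ext (fun n => q ^ n / beta n * / s)).
    intros n; reflexivity. apply is_series_scal_r. apply Series_correct; auto. }
  assert (Ak : ex_series (fun n => Cmod (k n) * Cmod z ^ n)).
  { apply (ex_series_ext (fun n => q ^ n / beta n * / s)).
    intros n. rewrite Hkm. fold x. unfold q. rewrite <- pow_sq_swap. simpl. pose proof (hpos n). fs.
    destruct EK as [L EL]. exists (L * / s). apply is_series_scal_r. exact EL. }
  pose proof (prod_value h k z l (RtoC s) Hl Vk (analytic_abs h z Ha Hz) Ak) as Vc.
  set (c := cauchy_prod h k) in *.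
  set (a := fun n => Cmod (c n) * sqrt (beta n)).
  set (b := fun n => x ^ n / sqrt (beta n)).
  assert (Hsb : forall n, 0 < sqrt (beta n)) by (intros; apply sqrt_lt_R0; auto).
  assert (Hab : forall n, a n * b n = Cmod (c n * z ^ n)%C).
  { intros n. unfold a, b. rewrite Cmod_mult_pow. fold x. pose proof (Hsb n). fs. }
  assert (Ha2 : forall n, a n ^ 2 = Cmod (c n) ^ 2 * beta n).
  { intros n. unfold a. rewrite Rpow_mult_distr, pow2_sqrt. reflexivity. specialize (hpos n); lra. }
  assert (Hb2 : forall n, b n ^ 2 = q ^ n / beta n).
  { intros n. unfold b, q. rewrite <- pow_sq_swap. unfold Rdiv. rewrite Rpow_mult_distr, pow_inv, pow2_sqrt.
    reflexivity. specialize (hpos n); lra. }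
  assert (Ea2 : ex_series (fun n => a n ^ 2)).
  { eapply ex_series_ext. intros n; symmetry; apply Ha2. exact Hck. }
  assert (Eb2 : ex_series (fun n => b n ^ 2)).
  { eapply ex_series_ext. intros n; symmetry; apply Hb2. exact EK. }
  assert (Ht : 0 < s / M) by (apply Rdiv_lt_0_compat; auto).
  destruct (amgm_series a b (s / M) Ht) as [Eab Sab]; auto.
  { intros n; unfold a; apply Rmult_le_pos; [apply Cmod_ge_0| left; auto]. }
  { intros n; unfold b; unfold Rdiv; apply Rmult_le_pos; [apply pow_le; lra| left; apply Rinv_0_lt_compat; auto]. }
  rewrite (Series_ext _ _ Ha2), (Series_ext _ _ Hb2) in Sab. fold K in Sab.
  assert (Cl : Cmod (l * RtoC s)%C <= Series (fun n => Cmod (c n * z ^ n)%C)).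
  { apply Cmod_series_le. exact Vc. eapply ex_series_ext; [exact Hab| exact Eab]. }
  rewrite <- (Series_ext _ _ Hab) in Cl.
  rewrite Cmod_mult, Cmod_R, Rabs_pos_eq in Cl by lra.
  assert (Series (fun n => a n * b n) <= s * M).
  { eapply Rle_trans. exact Sab.
    assert (s / M * Series (fun n => Cmod (c n) ^ 2 * beta n) <= s / M * M ^ 2).
    { apply Rmult_le_compat_l; lra. }
    replace ((s / M * M ^ 2 + K / (s / M)) / 2) with (s * M) in H.
    2:{ rewrite <- HsK. field. lra. }
    replace (s * M) with ((s / M * M ^ 2 + K / (s / M)) / 2) by (rewrite <- HsK; field; lra).
    lra. }
  apply Rmult_le_reg_r with s; auto. lra.
Qed.

Definition E (t : R) : C := (cos t, sin t).

Lemma E_mult a b : (E a * E b)%C = E (a + b).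
Proof. unfold E, Cmult; simpl. rewrite cos_plus, sin_plus. f_equal; ring. Qed.

Lemma E_conj a : Cconj (E a) = E (- a).
Proof. unfold E, Cconj; simpl. rewrite cos_neg, sin_neg. reflexivity. Qed.

Lemma E_0 : E 0 = 1%C.
Proof. unfold E. rewrite cos_0, sin_0. reflexivity. Qed.

Lemma E_pow a j : (E a ^ j)%C = E (INR j * a).
Proof.
  induction j. simpl. rewrite Rmult_0_l, E_0; try reflexivity.
  rewrite Cpow_S, IHj, E_mult. f_equal. rewrite S_INR. ring.
Qed.

Lemma Cmod_E a : Cmod (E a) = 1.
Proof.
  unfold E, Cmod. cbn [fst snd].
  pose proof (sin2_cos2 a). unfold Rsqr in H.
  replace (cos a ^ 2 + sin a ^ 2) with 1 by nra. apply sqrt_1.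
Qed.

Lemma E_2PIn n : E (2 * PI * INR n) = 1%C.
Proof.
  unfold E. replace (2 * PI * INR n) with (0 + 2 * INR n * PI) by ring.
  rewrite cos_period, sin_period, cos_0, sin_0. reflexivity.
Qed.

Lemma E_neq_1 phi : 0 < Rabs phi < 2 * PI -> E phi <> 1%C.
Proof.
  intros H HE. unfold E in HE. injection HE as Hc Hs.
  assert (Hc' : cos (Rabs phi) = 1).
  { destruct (Rle_dec 0 phi). rewrite Rabs_pos_eq; auto. rewrite Rabs_left by lra. rewrite cos_neg; auto. }
  replace (Rabs phi) with (2 * (Rabs phi / 2)) in Hc' by field.
  rewrite cos_2a_sin in Hc'.
  assert (0 < sin (Rabs phi / 2)) by (apply sin_gt_0; lra).
  nra.
Qed.

Fixpoint csum (f : nat -> C) (n : nat) : C :=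
  match n with O => 0%C | S n => (csum f n + f n)%C end.

Lemma csum_ext (f g : nat -> C) n : (forall i, (i < n)%nat -> f i = g i) -> csum f n = csum g n.
Proof.
  induction n; intros H; simpl; auto. rewrite IHn, H by (intros; apply H; lia) || lia. reflexivity.
Qed.

Lemma csum_plus (f g : nat -> C) n : csum (fun i => f i + g i)%C n = (csum f n + csum g n)%C.
Proof. induction n; simpl. ring. rewrite IHn. ring. Qed.

Lemma csum_mult_l (c : C) (f : nat -> C) n : csum (fun i => c * f i)%C n = (c * csum f n)%C.
Proof. induction n; simpl. ring. rewrite IHn. ring. Qed.

Lemma csum_conj (f : nat -> C) n : Cconj (csum f n) = csum (fun i => Cconj (f i)) n.
Proof.
  induction n; simpl. unfold Cconj; simpl. apply injective_projections; simpl; ring.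
  rewrite <- IHn. destruct (csum f n), (f n). unfold Cconj, Cplus; simpl.
  apply injective_projections; simpl; ring.
Qed.

Lemma csum_mult (f g : nat -> C) n m : (csum f n * csum g m)%C = csum (fun i => csum (fun j => f i * g j) m)%C n.
Proof.
  induction n; simpl. ring. rewrite <- IHn. rewrite csum_mult_l. ring.
Qed.

Lemma csum_switch (u : nat -> nat -> C) n m :
  csum (fun i => csum (u i) m) n = csum (fun j => csum (fun i => u i j) n) m.
Proof.
  induction n; simpl.
  - induction m; simpl; auto. rewrite <- IHm. ring.
  - rewrite IHn. rewrite <- csum_plus. reflexivity.
Qed.

Lemma csum_const (c : C) n : csum (fun _ => c) n = (INR n * c)%C.
Proof.
  induction n. simpl. ring. cbn [csum]. rewrite IHn, S_INR. rewrite RtoC_plus. ring.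
Qed.

Lemma csum_single (f : nat -> C) i n : (i < n)%nat -> (forall j, (j < n)%nat -> j <> i -> f j = 0%C) -> csum f n = f i.
Proof.
  intros Hi H. induction n. lia.
  cbn [csum]. destruct (Nat.eq_dec i n).
  - subst. replace (csum f n) with (RtoC 0). ring.
    clear IHn Hi. assert (forall m, (m <= n)%nat -> csum f m = 0%C).
    { induction m; intros Hm; cbn [csum]; auto. rewrite IHm, (H m) by lia. ring. }
    symmetry; apply H0; lia.
  - rewrite IHn, (H n) by (intros; try apply H; lia). ring.
Qed.

Lemma geom_csum (v : C) (N : nat) : v <> 1%C -> (v ^ N)%C = 1%C -> csum (fun j => v ^ j)%C N = 0%C.
Proof.
  intros Hv HN.
  assert (Hg : forall n, (csum (fun j => v ^ j) n * (v - 1))%C = (v ^ n - 1)%C).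
  { induction n; simpl. ring. rewrite Cmult_plus_distr_r, IHn. ring. }
  specialize (Hg N). rewrite HN in Hg.
  assert (Hv1 : (v - 1)%C <> 0%C). { intros E0. apply Hv. replace v with ((v - 1) + 1)%C by ring. rewrite E0. ring. }
  set (s := csum _ N) in *.
  replace s with (s * (v - 1) * / (v - 1))%C by (field; auto).
  rewrite Hg. ring.
Qed.

Definition om (N j : nat) : C := E (2 * PI * INR j / INR N).

Lemma Cconj_mult (x y : C) : Cconj (x * y)%C = (Cconj x * Cconj y)%C.
Proof. destruct x, y; unfold Cconj, Cmult; simpl. apply injective_projections; simpl; ring. Qed.

Lemma root_sum N n m : (0 < N)%nat -> (n < N)%nat -> (m < N)%nat ->
  csum (fun j => om N j ^ n * Cconj (om N j ^ m))%C N = if Nat.eqb n m then RtoC (INR N) else 0%C.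
Proof.
  intros HN Hn Hm.
  assert (HNr : 0 < INR N) by (apply lt_0_INR; lia).
  set (phi := 2 * PI * (INR n - INR m) / INR N).
  rewrite (csum_ext _ (fun j => (E phi) ^ j)%C).
  2:{ intros j _. cbv beta. unfold om. rewrite !E_pow, E_conj, E_mult. f_equal. unfold phi. field. lra. }
  destruct (Nat.eqb_spec n m).
  - subst. unfold phi. replace (2 * PI * (INR m - INR m) / INR N) with 0 by (field; lra).
    rewrite E_0. rewrite (csum_ext _ (fun _ => 1%C)). rewrite csum_const. ring.
    intros j _. apply Cpow_1_l.
  - apply geom_csum.
    + apply E_neq_1. unfold phi.
      assert (Hd : 1 <= Rabs (INR n - INR m) <= INR N - 1).
      { destruct (le_lt_dec n m).
        - rewrite Rabs_left1. split.
          + assert (INR n + 1 <= INR m) by (rewrite <- S_INR; apply le_INR; lia). lra.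
          + assert (INR m + 1 <= INR N) by (rewrite <- S_INR; apply le_INR; lia).
            pose proof (pos_INR n). lra.
          + assert (INR n <= INR m) by (apply le_INR; lia). lra.
        - rewrite Rabs_pos_eq. split.
          + assert (INR m + 1 <= INR n) by (rewrite <- S_INR; apply le_INR; lia). lra.
          + assert (INR n + 1 <= INR N) by (rewrite <- S_INR; apply le_INR; lia).
            pose proof (pos_INR m). lra.
          + assert (INR m <= INR n) by (apply le_INR; lia). lra. }
      unfold Rdiv. rewrite !Rabs_mult, Rabs_inv, (Rabs_pos_eq (INR N)) by lra.
      rewrite (Rabs_pos_eq 2) by lra. rewrite (Rabs_pos_eq PI) by (pose proof PI_RGT_0; lra).
      pose proof PI_RGT_0. split.
      * apply Rmult_lt_0_compat. apply Rmult_lt_0_compat. lra. lra. apply Rinv_0_lt_compat; lra.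
      * apply Rmult_lt_reg_r with (INR N); auto.
        rewrite Rmult_assoc, Rinv_l by lra. nra.
    + rewrite E_pow. unfold phi.
      replace (INR N * (2 * PI * (INR n - INR m) / INR N)) with (2 * PI * INR n + - (2 * PI * INR m)) by (field; lra).
      rewrite <- E_mult, <- E_conj, !E_2PIn. unfold Cconj; simpl. apply injective_projections; simpl; ring.
Qed.

Lemma parseval (a : nat -> C) N : (0 < N)%nat ->
  csum (fun j => RtoC (Cmod (csum (fun n => a n * om N j ^ n) N) ^ 2))%C N =
  (INR N * csum (fun n => RtoC (Cmod (a n) ^ 2)) N)%C.
Proof.
  intros HN.
  rewrite (csum_ext _ (fun j => csum (fun n => csum (fun m => (a n * om N j ^ n) * Cconj (a m * om N j ^ m)) N) N)%C).
  2:{ intros j _. rewrite Cmod2_conj. rewrite csum_conj. apply csum_mult. }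
  rewrite csum_switch.
  rewrite (csum_ext _ (fun n => csum (fun m => csum (fun j => (a n * om N j ^ n) * Cconj (a m * om N j ^ m))%C N) N)).
  2:{ intros n _. apply csum_switch. }
  rewrite <- csum_mult_l. apply csum_ext. intros n Hn. cbv beta.
  rewrite (csum_single (fun m => csum (fun j => (a n * om N j ^ n * Cconj (a m * om N j ^ m))%C) N) n N Hn).
  - rewrite (csum_ext _ (fun j => (a n * Cconj (a n)) * (om N j ^ n * Cconj (om N j ^ n)))%C).
    2:{ intros j _. rewrite Cconj_mult. ring. }
    rewrite csum_mult_l, root_sum, Nat.eqb_refl by auto. rewrite Cmod2_conj. ring.
  - intros m HmN Hmn.
    rewrite (csum_ext _ (fun j => (a n * Cconj (a m)) * (om N j ^ n * Cconj (om N j ^ m)))%C).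
    2:{ intros j _. rewrite Cconj_mult. ring. }
    rewrite csum_mult_l, root_sum by auto. destruct (Nat.eqb_spec n m). lia. ring.
Qed.

Fixpoint rsum (f : nat -> R) (n : nat) : R :=
  match n with O => 0 | S n => rsum f n + f n end.

Lemma csum_RtoC (f : nat -> R) n : csum (fun i => RtoC (f i)) n = RtoC (rsum f n).
Proof. induction n; simpl. reflexivity. rewrite IHn, RtoC_plus. reflexivity. Qed.

Lemma RtoC_inj' (x y : R) : RtoC x = RtoC y -> x = y.
Proof. intros H. injection H; auto. Qed.

Lemma rsum_le (f g : nat -> R) n : (forall i, (i < n)%nat -> f i <= g i) -> rsum f n <= rsum g n.
Proof. induction n; simpl; intros H. lra. pose proof (H n ltac:(lia)). assert (rsum f n <= rsum g n) by (apply IHn; intros; apply H; lia). lra. Qed.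

Lemma rsum_plus (f g : nat -> R) n : rsum (fun i => f i + g i) n = rsum f n + rsum g n.
Proof. induction n; simpl. ring. rewrite IHn. ring. Qed.

Lemma rsum_scal c (f : nat -> R) n : rsum (fun i => c * f i) n = c * rsum f n.
Proof. induction n; simpl. ring. rewrite IHn. ring. Qed.

Lemma rsum_const c n : rsum (fun _ => c) n = INR n * c.
Proof. induction n. simpl. ring. cbn [rsum]. rewrite IHn, S_INR. ring. Qed.

Lemma rsum_sum_n (f : nat -> R) k : sum_n f k = rsum f (S k).
Proof. induction k. rewrite sum_O. cbn [rsum]. now rewrite Rplus_0_l. rewrite sum_Sn, IHk. cbn [rsum]. reflexivity. Qed.

Lemma csum_sum_n (f : nat -> C) k : sum_n f k = csum f (S k).
Proof. induction k. rewrite sum_O. cbn [csum]. now rewrite Cplus_0_l. rewrite sum_Sn, IHk. cbn [csum]. reflexivity. Qed.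

Lemma rsum_mono (f : nat -> R) n m : (forall i, 0 <= f i) -> (n <= m)%nat -> rsum f n <= rsum f m.
Proof. intros H Hnm. induction Hnm. lra. simpl. pose proof (H m). lra. Qed.

Lemma rsum_zero_tail (f : nat -> R) n m : (n <= m)%nat -> (forall i, (n <= i)%nat -> f i = 0) -> rsum f m = rsum f n.
Proof. intros Hnm H. induction Hnm. auto. simpl. rewrite IHHnm, H by lia. ring. Qed.

Lemma bernoulli y n : 0 <= y <= 1 -> 1 - INR n * (1 - y) <= y ^ n.
Proof.
  intros Hy. induction n. simpl. lra.
  rewrite S_INR. simpl. assert (0 <= y ^ n) by (apply pow_le; lra).
  pose proof (pos_INR n).
  assert (y * (1 - INR n * (1 - y)) <= y * y ^ n) by (apply Rmult_le_compat_l; lra).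
  assert (0 <= INR n * ((1 - y) * (1 - y))) by (apply Rmult_le_pos; nra).
  nra.
Qed.

Lemma rsum_ext_eq (f g : nat -> R) n : (forall i, (i < n)%nat -> f i = g i) -> rsum f n = rsum g n.
Proof. induction n; simpl; intros H; auto. rewrite IHn, (H n) by (intros; try apply H; lia). reflexivity. Qed.

Lemma fin_ex_series_R (a : nat -> R) k : (forall n, (k < n)%nat -> a n = 0) -> ex_series a.
Proof. intros H. exists (sum_n a k). apply (is_series_finite (K:=R_AbsRing) (V:=R_NormedModule)). exact H. Qed.

Lemma ball_R (x y : R) (e : posreal) : ball x e y -> Rabs (y - x) < e.
Proof. intros H. unfold ball in H. simpl in H. unfold AbsRing_ball in H. unfold abs, minus, plus, opp in H. simpl in H. exact H. Qed.

Lemma tail_small (a : nat -> R) : ex_series a -> forall eta, 0 < eta ->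
  exists N0, forall N, (N0 <= N)%nat -> Series (fun i => a (N + i)%nat) <= eta.
Proof.
  intros Ea eta Heta. pose proof (Series_correct _ Ea) as Hs.
  destruct (proj1 (filterlim_locally _ _) Hs (mkposreal _ Heta)) as [M HM].
  exists (S M). intros N HN.
  pose proof (HM (pred N) ltac:(lia)) as B. apply ball_R in B. simpl in B.
  rewrite sum_n_Reals in B.
  pose proof (Series_incr_n a N ltac:(lia) Ea) as E.
  apply Rabs_def2 in B. lra.
Qed.

Lemma abs_conv_prod (h g : nat -> C) k r : analytic_disk h -> (forall m, (k < m)%nat -> g m = 0%C) -> 0 <= r < 1 ->
  ex_series (fun n => Cmod (cauchy_prod h g n) * r ^ n).
Proof.
  intros Ha Hg Hr.
  assert (Hzr : Cmod (RtoC r) < 1) by (rewrite Cmod_R, Rabs_pos_eq; lra).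
  pose proof (analytic_abs h (RtoC r) Ha Hzr) as Ah. rewrite Cmod_R, Rabs_pos_eq in Ah by lra.
  assert (Ag : ex_series (fun n => Cmod (g n) * r ^ n)).
  { apply (fin_ex_series_R _ k). intros n Hn. rewrite Hg, Cmod_0 by lia. ring. }
  destruct Ah as [lh Lh]. destruct Ag as [lg Lg].
  pose proof (is_series_mult_pos _ _ _ _ Lh Lg) as P.
  apply (ex_series_le (fun n => Cmod (cauchy_prod h g n) * r ^ n)
    (fun n => sum_f_R0 (fun j => Cmod (h j) * r ^ j * (Cmod (g (n - j)%nat) * r ^ (n - j))) n)).
  - intros n. unfold norm; simpl; unfold abs; simpl.
    rewrite Rabs_pos_eq by (apply Rmult_le_pos; [apply Cmod_ge_0|apply pow_le; lra]).
    unfold cauchy_prod. eapply Rle_trans.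
    apply Rmult_le_compat_r. apply pow_le; lra. apply Cmod_sum_n_le.
    rewrite <- sum_n_Reals. rewrite <- (sum_n_mult_r (K := R_Ring)).
    apply sum_n_le_loc. intros j Hj. unfold mult; simpl.
    rewrite Cmod_mult. replace (r ^ n) with (r ^ j * r ^ (n - j)).
    apply Req_le; ring. rewrite <- pow_add. f_equal. lia.
  - eexists. apply P.
    + intros n; apply Rmult_le_pos; [apply Cmod_ge_0| apply pow_le; lra].
    + intros n; apply Rmult_le_pos; [apply Cmod_ge_0| apply pow_le; lra].
Qed.

Lemma csum_pred (f : nat -> C) N : (0 < N)%nat -> csum f N = sum_n f (pred N).
Proof. intros H. rewrite csum_sum_n. f_equal. lia. Qed.

Lemma parseval_R (a : nat -> C) N : (0 < N)%nat ->
  rsum (fun j => Cmod (csum (fun n => a n * om N j ^ n)%C N) ^ 2) N =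
  INR N * rsum (fun n => Cmod (a n) ^ 2) N.
Proof.
  intros HN. apply RtoC_inj'. rewrite <- !csum_RtoC, RtoC_mult, <- csum_RtoC.
  apply parseval; auto.
Qed.

Lemma sq_split a b d : 0 < d -> (a + b) ^ 2 <= (1 + d) * a ^ 2 + (1 + / d) * b ^ 2.
Proof.
  intros Hd. assert (0 <= (d * a - b) ^ 2 / d) by (apply Rmult_le_pos; [apply pow2_ge_0| left; apply Rinv_0_lt_compat; auto]).
  replace ((1 + d) * a ^ 2 + (1 + / d) * b ^ 2) with ((a + b) ^ 2 + (d * a - b) ^ 2 / d) by (field; lra).
  lra.
Qed.

Lemma tp_fixed_r (h g : nat -> C) Sb k r : analytic_disk h -> 0 <= Sb ->
  (forall z l, Cmod z < 1 -> value_at h z l -> Cmod l <= Sb) ->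
  (forall m, (k < m)%nat -> g m = 0%C) -> 0 < r < 1 ->
  rsum (fun n => Cmod (cauchy_prod h g n * RtoC (r ^ n))%C ^ 2) (S k) <=
  Sb ^ 2 * rsum (fun n => Cmod (g n) ^ 2) (S k).
Proof.
  intros Ha HS Hb Hg Hr.
  set (c := cauchy_prod h g).
  set (B := rsum (fun n => Cmod (g n) ^ 2) (S k)).
  set (X := rsum (fun n => Cmod (c n * RtoC (r ^ n))%C ^ 2) (S k)).
  assert (HB : 0 <= B) by (unfold B; rewrite <- (Rmult_0_r (INR (S k))), <- rsum_const; apply rsum_le; intros; apply pow2_ge_0).
  pose proof (abs_conv_prod h g k r Ha Hg ltac:(lra)) as Ac. fold c in Ac.
  set (a := fun n => Cmod (c n) * r ^ n) in Ac.
  assert (Claim : forall d eta, 0 < d -> 0 < eta -> X <= (1 + d) * Sb ^ 2 * B + eta).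
  { intros d eta Hd Heta.
    assert (Hq : 0 < eta / (1 + / d)).
    { apply Rdiv_lt_0_compat; auto. pose proof (Rinv_0_lt_compat d Hd). lra. }
    destruct (tail_small a Ac (sqrt (eta / (1 + / d))) (sqrt_lt_R0 _ Hq)) as [N0 HN0].
    set (N := Nat.max N0 (S k)).
    assert (HNpos : (0 < N)%nat) by (unfold N; lia).
    set (eN := Series (fun i => a (N + i)%nat)).
    assert (EaN : ex_series (fun i => a (N + i)%nat)) by (apply ex_series_incr_n; auto).
    assert (HeN0 : 0 <= eN).
    { apply Series_nonneg; auto. intros i; unfold a; apply Rmult_le_pos; [apply Cmod_ge_0|apply pow_le; lra]. }
    assert (HeN : (1 + / d) * eN ^ 2 <= eta).
    { assert (eN <= sqrt (eta / (1 + / d))) by (apply HN0; unfold N; lia).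
      assert (eN ^ 2 <= eta / (1 + / d)).
      { rewrite <- (pow2_sqrt (eta / (1 + / d))) by lra. apply pow_incr. lra. }
      pose proof (Rinv_0_lt_compat d Hd).
      apply Rmult_le_compat_l with (r := 1 + / d) in H0; [|lra].
      replace ((1 + / d) * (eta / (1 + / d))) with eta in H0 by (field; lra). lra. }
    set (Q := fun j => csum (fun n => (c n * RtoC (r ^ n)) * om N j ^ n)%C N).
    set (G := fun j => csum (fun n => (g n * RtoC (r ^ n)) * om N j ^ n)%C N).
    assert (PW : forall j, Cmod (Q j) ^ 2 <= (1 + d) * Sb ^ 2 * Cmod (G j) ^ 2 + (1 + / d) * eN ^ 2).
    { intros j.
      set (w := (RtoC r * om N j)%C).
      assert (Hwm : Cmod w = r) by (unfold w, om; rewrite Cmod_mult, Cmod_R, Cmod_E, Rabs_pos_eq; lra).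
      assert (Hw1 : Cmod w < 1) by lra.
      assert (Hw : forall (x : C) n, (x * RtoC (r ^ n) * om N j ^ n)%C = (x * w ^ n)%C).
      { intros x n. unfold w. rewrite Cpow_mult_l, <- RtoC_pow. ring. }
      assert (Vg : value_at g w (G j)).
      { unfold value_at, G. rewrite (csum_ext _ (fun n => g n * w ^ n)%C) by (intros; apply Hw).
        rewrite csum_pred by auto.
        apply (is_series_finite (K:=C_AbsRing) (V:=C_NormedModule)). intros m Hm. rewrite Hg by (unfold N in *; lia). apply Cmult_0_l. }
      destruct (Ha w Hw1) as [H0 Hh].
      assert (Ag : ex_series (fun n => Cmod (g n) * Cmod w ^ n)).
      { apply (fin_ex_series_R _ k). intros n Hn. rewrite Hg, Cmod_0 by lia. ring. }
      pose proof (prod_value h g w H0 (G j) Hh Vg (analytic_abs h w Ha Hw1) Ag) as Vc. fold c in Vc.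
      assert (Tl : is_series (fun i => (c (N + i)%nat * w ^ (N + i))%C) (H0 * G j - Q j)%C).
      { assert (Ev : @eq C (plus (H0 * G j - Q j)%C (sum_n (fun n => (c n * w ^ n)%C) (pred N))) (H0 * G j)%C).
        { unfold Q. rewrite (csum_ext _ (fun n => c n * w ^ n)%C) by (intros; apply Hw).
          rewrite csum_pred by auto. change plus with Cplus. ring. }
        assert (Vc' : is_series (fun n => (c n * w ^ n)%C) (plus (H0 * G j - Q j)%C (sum_n (fun n => (c n * w ^ n)%C) (pred N)))).
        { rewrite Ev. exact Vc. }
        exact (is_series_incr_n _ N _ HNpos Vc'). }
      assert (HT : Cmod (H0 * G j - Q j)%C <= eN).
      { unfold eN. rewrite (Series_ext _ (fun i => Cmod (c (N + i)%nat * w ^ (N + i))%C)).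
        apply Cmod_series_le. exact Tl.
        eapply ex_series_ext; [|exact EaN]. intros i. unfold a. rewrite Cmod_mult_pow, Hwm. reflexivity.
        intros i. unfold a. rewrite Cmod_mult_pow, Hwm. reflexivity. }
      assert (HQ : Cmod (Q j) <= Sb * Cmod (G j) + eN).
      { replace (Q j) with (H0 * G j + - (H0 * G j - Q j))%C by ring.
        eapply Rle_trans. apply Cmod_triangle. rewrite Cmod_opp, Cmod_mult.
        pose proof (Hb w H0 Hw1 Hh). pose proof (Cmod_ge_0 (G j)).
        apply Rplus_le_compat; auto. apply Rmult_le_compat_r; auto. }
      eapply Rle_trans. apply pow_incr. split. apply Cmod_ge_0. exact HQ.
      eapply Rle_trans. apply (sq_split _ _ d Hd). apply Req_le. rewrite Rpow_mult_distr. ring. }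
    assert (Sum : rsum (fun j => Cmod (Q j) ^ 2) N <=
                  (1 + d) * Sb ^ 2 * rsum (fun j => Cmod (G j) ^ 2) N + INR N * ((1 + / d) * eN ^ 2)).
    { rewrite <- rsum_scal, <- rsum_const, <- rsum_plus. apply rsum_le. intros j _. apply PW. }
    unfold Q, G in Sum. rewrite !parseval_R in Sum by auto.
    assert (HNr : 0 < INR N) by (apply lt_0_INR; auto).
    assert (Y : rsum (fun n => Cmod (c n * RtoC (r ^ n))%C ^ 2) N <=
                (1 + d) * Sb ^ 2 * rsum (fun n => Cmod (g n * RtoC (r ^ n))%C ^ 2) N + (1 + / d) * eN ^ 2).
    { apply Rmult_le_reg_l with (INR N); auto. nra. }
    assert (X1 : X <= rsum (fun n => Cmod (c n * RtoC (r ^ n))%C ^ 2) N).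
    { apply rsum_mono. intros; apply pow2_ge_0. unfold N; lia. }
    assert (G1 : rsum (fun n => Cmod (g n * RtoC (r ^ n))%C ^ 2) N <= B).
    { unfold B. rewrite <- (rsum_zero_tail (fun n => Cmod (g n) ^ 2) (S k) N) by
        (unfold N; lia || (intros i Hi; rewrite Hg, Cmod_0 by lia; ring)).
      apply rsum_le. intros i _. apply pow_incr. split. apply Cmod_ge_0.
      rewrite Cmod_mult, Cmod_R, Rabs_pos_eq by (apply pow_le; lra).
      rewrite <- (Rmult_1_r (Cmod (g i))) at 2. apply Rmult_le_compat_l. apply Cmod_ge_0.
      apply pow_le_1. lra. }
    assert (0 <= (1 + d) * Sb ^ 2) by (apply Rmult_le_pos; [lra| apply pow2_ge_0]).
    assert ((1 + d) * Sb ^ 2 * rsum (fun n => Cmod (g n * RtoC (r ^ n))%C ^ 2) N <= (1 + d) * Sb ^ 2 * B)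
      by (apply Rmult_le_compat_l; auto).
    lra. }
  destruct (Rle_dec X (Sb ^ 2 * B)) as [Hle|Hgt]; auto. exfalso.
  set (e := X - Sb ^ 2 * B).
  assert (He : 0 < e) by (unfold e; lra).
  assert (HSB : 0 <= Sb ^ 2 * B) by (apply Rmult_le_pos; [apply pow2_ge_0| auto]).
  set (d := e / (2 * (Sb ^ 2 * B + 1))).
  assert (Hd : 0 < d) by (unfold d; apply Rdiv_lt_0_compat; lra).
  pose proof (Claim d (e / 4) Hd ltac:(lra)) as C1.
  assert (d * (Sb ^ 2 * B) <= e / 2).
  { unfold d. apply Rmult_le_reg_r with (2 * (Sb ^ 2 * B + 1)). lra.
    replace (e / (2 * (Sb ^ 2 * B + 1)) * (Sb ^ 2 * B) * (2 * (Sb ^ 2 * B + 1))) with (e * (Sb ^ 2 * B)) by (field; lra).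
    nra. }
  assert ((1 + d) * Sb ^ 2 * B = Sb ^ 2 * B + d * (Sb ^ 2 * B)) by ring.
  assert (Ee : e = X - Sb ^ 2 * B) by reflexivity. lra.
Qed.

Lemma trunc_parseval (h g : nat -> C) Sb k : analytic_disk h -> 0 <= Sb ->
  (forall z l, Cmod z < 1 -> value_at h z l -> Cmod l <= Sb) ->
  (forall m, (k < m)%nat -> g m = 0%C) ->
  rsum (fun n => Cmod (cauchy_prod h g n) ^ 2) (S k) <= Sb ^ 2 * rsum (fun n => Cmod (g n) ^ 2) (S k).
Proof.
  intros Ha HS Hb Hg.
  set (Y := rsum (fun n => Cmod (cauchy_prod h g n) ^ 2) (S k)).
  set (B := rsum (fun n => Cmod (g n) ^ 2) (S k)).
  assert (HY : 0 <= Y) by (unfold Y; rewrite <- (Rmult_0_r (INR (S k))), <- rsum_const; apply rsum_le; intros; apply pow2_ge_0).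
  assert (Hr : forall r, 0 < r < 1 -> (1 - 2 * INR k * (1 - r)) * Y <= Sb ^ 2 * B).
  { intros r Hr. eapply Rle_trans. 2: apply (tp_fixed_r h g Sb k r Ha HS Hb Hg Hr).
    fold B. unfold Y. rewrite <- rsum_scal.
    apply rsum_le. intros n Hn.
    rewrite Cmod_mult, Cmod_R, Rabs_pos_eq by (apply pow_le; lra).
    rewrite Rpow_mult_distr. rewrite Rmult_comm. apply Rmult_le_compat_l. apply pow2_ge_0.
    assert (r ^ k <= r ^ n).
    { replace k with (n + (k - n))%nat by lia. rewrite pow_add.
      rewrite <- (Rmult_1_r (r ^ n)) at 2. apply Rmult_le_compat_l. apply pow_le; lra.
      apply pow_le_1. lra. }
    pose proof (bernoulli r k ltac:(lra)).
    assert (0 <= r ^ k) by (apply pow_le; lra).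
    pose proof (pos_INR k).
    assert ((r ^ k) ^ 2 <= (r ^ n) ^ 2) by (apply pow_incr; lra).
    assert (1 - 2 * INR k * (1 - r) <= (r ^ k) ^ 2).
    { destruct (Rle_dec 0 (1 - INR k * (1 - r))).
      - assert ((1 - INR k * (1 - r)) ^ 2 <= (r ^ k) ^ 2) by (apply pow_incr; lra).
        assert (0 <= (INR k * (1 - r)) ^ 2) by apply pow2_ge_0. nra.
      - assert (0 <= (r ^ k) ^ 2) by apply pow2_ge_0. nra. }
    lra. }
  destruct (Rle_dec Y (Sb ^ 2 * B)) as [Hle|Hgt]; auto. exfalso.
  set (e := Y - Sb ^ 2 * B). assert (He : 0 < e) by (unfold e; lra).
  pose proof (pos_INR k) as Hk.
  set (t := Rmin (e / (2 * (2 * INR k * Y + 1))) (1 / 2)).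
  assert (Ht : 0 < t).
  { unfold t. apply Rmin_glb_lt. apply Rdiv_lt_0_compat. lra. nra. lra. }
  assert (Ht2 : t <= 1 / 2) by apply Rmin_r.
  assert (Ht1 : t <= e / (2 * (2 * INR k * Y + 1))) by apply Rmin_l.
  pose proof (Hr (1 - t) ltac:(lra)) as H1.
  replace (1 - (1 - t)) with t in H1 by ring.
  assert (2 * INR k * Y * t <= e / 2).
  { apply Rle_trans with (2 * INR k * Y * (e / (2 * (2 * INR k * Y + 1)))).
    apply Rmult_le_compat_l. nra. exact Ht1.
    apply Rmult_le_reg_r with (2 * (2 * INR k * Y + 1)). nra.
    replace (2 * INR k * Y * (e / (2 * (2 * INR k * Y + 1))) * (2 * (2 * INR k * Y + 1))) with (2 * INR k * Y * e) by (field; nra).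
    nra. }
  assert (Ee : e = Y - Sb ^ 2 * B) by reflexivity.
  nra.
Qed.

Lemma cauchy_prod_local (h f g : nat -> C) N : (forall m, (m <= N)%nat -> f m = g m) ->
  forall n, (n <= N)%nat -> cauchy_prod h f n = cauchy_prod h g n.
Proof.
  intros H n Hn. unfold cauchy_prod. apply sum_n_ext_loc. intros j Hj. rewrite H by lia. reflexivity.
Qed.

Definition cut (k : nat) (f : nat -> C) : nat -> C := fun n => if Nat.leb n k then f n else 0%C.

Lemma tp_general (h f : nat -> C) Sb k : analytic_disk h -> 0 <= Sb ->
  (forall z l, Cmod z < 1 -> value_at h z l -> Cmod l <= Sb) ->
  rsum (fun n => Cmod (cauchy_prod h f n) ^ 2) (S k) <= Sb ^ 2 * rsum (fun n => Cmod (f n) ^ 2) (S k).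
Proof.
  intros Ha HS Hb.
  pose proof (trunc_parseval h (cut k f) Sb k Ha HS Hb) as T.
  assert (Hc : forall m, (m <= k)%nat -> f m = cut k f m).
  { intros m Hm. unfold cut. destruct (Nat.leb_spec m k); [reflexivity| lia]. }
  rewrite (rsum_ext_eq (fun n => Cmod (cauchy_prod h f n) ^ 2) (fun n => Cmod (cauchy_prod h (cut k f) n) ^ 2)).
  rewrite (rsum_ext_eq (fun n => Cmod (f n) ^ 2) (fun n => Cmod (cut k f n) ^ 2)).
  apply T. intros m Hm. unfold cut. destruct (Nat.leb_spec m k); [lia| reflexivity].
  intros i Hi. rewrite Hc by lia. reflexivity.
  intros i Hi. rewrite (cauchy_prod_local h f (cut k f) k Hc) by lia. reflexivity.
Qed.

Fixpoint gmin (beta : nat -> R) (n : nat) : R :=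
  match n with O => beta O | S n => Rmin (gmin beta n) (beta (S n)) end.

Lemma gmin_le beta n : gmin beta n <= beta n.
Proof. destruct n; simpl. lra. apply Rmin_r. Qed.

Lemma gmin_decr beta n : gmin beta (S n) <= gmin beta n.
Proof. simpl. apply Rmin_l. Qed.

Lemma gmin_pos beta : (forall n, 0 < beta n) -> forall n, 0 < gmin beta n.
Proof. intros H n. induction n; simpl. auto. apply Rmin_glb_lt; auto. Qed.

Lemma gmin_ge beta C0 : (forall m n, (n <= m)%nat -> beta m <= C0 * beta n) ->
  forall n N, (n <= N)%nat -> beta N <= C0 * gmin beta n.
Proof.
  intros H n. induction n; intros N HN; simpl. apply H; lia.
  unfold Rmin. destruct (Rle_dec (gmin beta n) (beta (S n))). apply IHn; lia. apply H; lia.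
Qed.

Lemma abel (x y g : nat -> R) :
  (forall n, g (S n) <= g n) -> (forall n, 0 <= g n) ->
  (forall K, rsum x (S K) <= rsum y (S K)) ->
  forall K, rsum (fun n => x n * g n) (S K) <= rsum (fun n => y n * g n) (S K).
Proof.
  intros Hd Hp Hxy.
  assert (Cl : forall K, (rsum y (S K) - rsum x (S K)) * g K <=
             rsum (fun n => y n * g n) (S K) - rsum (fun n => x n * g n) (S K)).
  { induction K. simpl. lra.
    change (rsum y (S (S K))) with (rsum y (S K) + y (S K)).
    change (rsum x (S (S K))) with (rsum x (S K) + x (S K)).
    change (rsum (fun n => y n * g n) (S (S K))) with (rsum (fun n => y n * g n) (S K) + y (S K) * g (S K)).
    change (rsum (fun n => x n * g n) (S (S K))) with (rsum (fun n => x n * g n) (S K) + x (S K) * g (S K)).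
    pose proof (Hxy K). pose proof (Hd K). pose proof (Hp (S K)).
    assert ((rsum y (S K) - rsum x (S K)) * g (S K) <= (rsum y (S K) - rsum x (S K)) * g K) by (apply Rmult_le_compat_l; lra).
    nra. }
  intros K. pose proof (Cl K). pose proof (Hxy K). pose proof (Hp K).
  assert (0 <= (rsum y (S K) - rsum x (S K)) * g K) by (apply Rmult_le_pos; lra). lra.
Qed.

Lemma mult_bound beta (hpos : forall n, 0 < beta n) C0
  (HC : forall m n, (n <= m)%nat -> beta m <= C0 * beta n) (h : nat -> C) Sb :
  analytic_disk h -> 0 <= Sb ->
  (forall z l, Cmod z < 1 -> value_at h z l -> Cmod l <= Sb) ->
  forall f, in_H2 beta f -> in_H2 beta (cauchy_prod h f) /\
    Series (fun n => Cmod (cauchy_prod h f n) ^ 2 * beta n) <= C0 * Sb ^ 2 * Series (fun n => Cmod (f n) ^ 2 * beta n).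
Proof.
  intros Ha HS Hb f Hf.
  assert (HC0 : 0 < C0). { pose proof (HC 0%nat 0%nat (le_n _)). pose proof (hpos 0%nat). nra. }
  apply series_bounded.
  - intros n. apply Rmult_le_pos. apply pow2_ge_0. left; auto.
  - intros K. rewrite rsum_sum_n.
    pose proof (abel (fun n => Cmod (cauchy_prod h f n) ^ 2) (fun n => Sb ^ 2 * Cmod (f n) ^ 2) (gmin beta)
      (gmin_decr beta) (fun n => Rlt_le _ _ (gmin_pos beta hpos n))) as Ab.
    assert (T : forall k, rsum (fun n => Cmod (cauchy_prod h f n) ^ 2) (S k) <= rsum (fun n => Sb ^ 2 * Cmod (f n) ^ 2) (S k)).
    { intros k. rewrite rsum_scal. apply tp_general; auto. }
    specialize (Ab T K).
    apply Rle_trans with (C0 * rsum (fun n => Cmod (cauchy_prod h f n) ^ 2 * gmin beta n) (S K)).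
    { rewrite <- rsum_scal. apply rsum_le. intros i _.
      pose proof (gmin_ge beta C0 HC i i (le_n _)). 
      assert (0 <= Cmod (cauchy_prod h f i) ^ 2) by apply pow2_ge_0. nra. }
    apply Rle_trans with (C0 * rsum (fun n => Sb ^ 2 * Cmod (f n) ^ 2 * gmin beta n) (S K)).
    { apply Rmult_le_compat_l; lra. }
    apply Rle_trans with (C0 * Sb ^ 2 * rsum (fun n => Cmod (f n) ^ 2 * beta n) (S K)).
    { rewrite Rmult_assoc. apply Rmult_le_compat_l. lra. rewrite <- rsum_scal. apply rsum_le. intros i _.
      pose proof (gmin_le beta i). assert (0 <= Sb ^ 2 * Cmod (f i) ^ 2) by (apply Rmult_le_pos; apply pow2_ge_0). nra. }
    apply Rmult_le_compat_l. apply Rmult_le_pos. lra. apply pow2_ge_0.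
    rewrite <- rsum_sum_n. apply psum_le_series; auto.
    intros n. apply Rmult_le_pos. apply pow2_ge_0. left; auto.
Qed.

Definition N2 (beta : nat -> R) (x : nat -> C) (k : nat) : R :=
  rsum (fun n => Cmod (x n) ^ 2 * beta n) (S k).

Lemma rsum_nonneg (f : nat -> R) n : (forall i, 0 <= f i) -> 0 <= rsum f n.
Proof. intros H. induction n; simpl. lra. pose proof (H n). lra. Qed.

Lemma N2_nonneg beta (x : nat -> C) k : (forall n, 0 < beta n) -> 0 <= N2 beta x k.
Proof. intros H. apply rsum_nonneg. intros i. apply Rmult_le_pos. apply pow2_ge_0. left; auto. Qed.

Lemma rsum_term_le (f : nat -> R) n i : (forall j, 0 <= f j) -> (i < n)%nat -> f i <= rsum f n.
Proof.
  intros H Hi. induction n. lia. simpl. destruct (Nat.eq_dec i n).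
  subst. pose proof (rsum_nonneg f n H). lra.
  pose proof (IHn ltac:(lia)). pose proof (H n). lra.
Qed.

Lemma N2_zero beta (x : nat -> C) k : (forall n, 0 < beta n) -> N2 beta x k = 0 -> forall n, (n <= k)%nat -> x n = 0%C.
Proof.
  intros H H0 n Hn.
  assert (Cmod (x n) ^ 2 * beta n <= 0).
  { rewrite <- H0. apply (rsum_term_le (fun n => Cmod (x n) ^ 2 * beta n)). intros j.
    apply Rmult_le_pos. apply pow2_ge_0. left; auto. lia. }
  pose proof (H n). pose proof (Cmod_ge_0 (x n)).
  assert (Cmod (x n) ^ 2 <= 0).
  { apply Rmult_le_reg_r with (beta n); auto. lra. }
  apply Cmod_eq_0. apply Rle_antisym; auto. simpl in H3. nra.
Qed.

Lemma N2_ext beta (x : nat -> C) y k : (forall n, (n <= k)%nat -> x n = y n) -> N2 beta x k = N2 beta y k.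
Proof. intros H. unfold N2. apply rsum_ext_eq. intros i Hi. rewrite H by lia. reflexivity. Qed.

Lemma N2_supp beta (x : nat -> C) k K : (forall n, (k < n)%nat -> x n = 0%C) -> (k <= K)%nat -> N2 beta x K = N2 beta x k.
Proof.
  intros H HK. unfold N2. apply rsum_zero_tail. lia. intros i Hi. rewrite H, Cmod_0 by lia. ring.
Qed.

Lemma N2_mono beta (x : nat -> C) k K : (forall n, 0 < beta n) -> (k <= K)%nat -> N2 beta x k <= N2 beta x K.
Proof. intros H HK. unfold N2. apply rsum_mono. intros i. apply Rmult_le_pos. apply pow2_ge_0. left; auto. lia. Qed.

Lemma N2_le_series beta (x : nat -> C) k : (forall n, 0 < beta n) -> in_H2 beta x ->
  N2 beta x k <= Series (fun n => Cmod (x n) ^ 2 * beta n).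
Proof.
  intros H Hx. unfold N2. rewrite <- rsum_sum_n. apply psum_le_series; auto.
  intros i. apply Rmult_le_pos. apply pow2_ge_0. left; auto.
Qed.

Lemma N2_scal beta (c : R) x k : N2 beta (fun n => RtoC c * x n)%C k = c ^ 2 * N2 beta x k.
Proof.
  unfold N2. rewrite <- rsum_scal. apply rsum_ext_eq. intros i _.
  rewrite Cmod_mult, Cmod_R, Rpow_mult_distr, pow2_abs. ring.
Qed.

Lemma cp_plus (h x y : nat -> C) n :
  cauchy_prod h (fun m => x m + y m)%C n = (cauchy_prod h x n + cauchy_prod h y n)%C.
Proof.
  unfold cauchy_prod. rewrite <- (sum_n_plus (G := C_AbelianMonoid)). apply sum_n_ext. intros k.
  match goal with |- ?a = ?b => change (@eq C a b) end. change plus with Cplus. ring.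
Qed.

Lemma cp_scal (h x : nat -> C) (c : C) n :
  cauchy_prod h (fun m => c * x m)%C n = (c * cauchy_prod h x n)%C.
Proof.
  unfold cauchy_prod. rewrite <- (sum_n_mult_l (K := C_Ring)). apply sum_n_ext. intros k.
  match goal with |- ?a = ?b => change (@eq C a b) end. change mult with Cmult. ring.
Qed.

Lemma cp_zero (h x : nat -> C) n : (forall m, x m = 0%C) -> cauchy_prod h x n = 0%C.
Proof.
  intros H. unfold cauchy_prod. rewrite (sum_n_ext _ (fun _ => zero)).
  apply (sum_n_zero (G := C_AbelianMonoid)). reflexivity. intros k. rewrite H. apply Cmult_0_r.
Qed.

Lemma cp_ext (h x y : nat -> C) n : (forall m, x m = y m) -> cauchy_prod h x n = cauchy_prod h y n.
Proof. intros H. f_equal. apply functional_extensionality; auto. Qed.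

Lemma cp_csum (h : nat -> C) (F : nat -> nat -> C) A n :
  cauchy_prod h (fun m => csum (fun i => F i m) A) n = csum (fun i => cauchy_prod h (F i) n) A.
Proof.
  induction A; cbn [csum].
  - apply cp_zero. reflexivity.
  - rewrite cp_plus. rewrite IHA. reflexivity.
Qed.

Lemma Cmod_csum_le (f : nat -> C) n : Cmod (csum f n) <= rsum (fun i => Cmod (f i)) n.
Proof. induction n; simpl. rewrite Cmod_0. lra. eapply Rle_trans. apply Cmod_triangle. lra. Qed.

Lemma sq_rsum (r : nat -> R) n : (rsum r n) ^ 2 <= INR n * rsum (fun i => r i ^ 2) n.
Proof.
  induction n. simpl. lra.
  cbn [rsum]. rewrite S_INR.
  set (s := rsum r n) in *. set (Q := rsum (fun i => r i ^ 2) n) in *. set (x := r n).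
  assert (HQ : 0 <= Q) by (apply rsum_nonneg; intros; apply pow2_ge_0).
  pose proof (pos_INR n) as Hn.
  destruct (Req_dec (INR n) 0) as [E|E].
  - rewrite E in IHn. assert (s = 0).
    { rewrite Rmult_0_l in IHn. apply Rsqr_0_uniq. unfold Rsqr. apply Rle_antisym.
      replace (s * s) with (s ^ 2) by ring. exact IHn. apply Rle_0_sqr. }
    rewrite E, H. simpl. nra.
  - assert (Hn' : 0 < INR n) by lra.
    assert (INR n * (2 * s * x) <= s ^ 2 + INR n ^ 2 * x ^ 2).
    { pose proof (pow2_ge_0 (s - INR n * x)). nra. }
    assert (2 * s * x <= Q + INR n * x ^ 2).
    { apply Rmult_le_reg_l with (INR n); auto.
      assert (INR n * (Q + INR n * x ^ 2) = INR n * Q + INR n ^ 2 * x ^ 2) by ring. lra. }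
    assert ((s + x) ^ 2 = s ^ 2 + 2 * s * x + x ^ 2) by ring.
    assert ((INR n + 1) * (Q + x ^ 2) = INR n * Q + Q + INR n * x ^ 2 + x ^ 2) by ring.
    lra.
Qed.

Lemma rsum_switch (u : nat -> nat -> R) n m :
  rsum (fun i => rsum (u i) m) n = rsum (fun j => rsum (fun i => u i j) n) m.
Proof.
  induction n; simpl.
  - induction m; simpl; auto. rewrite <- IHm. ring.
  - rewrite IHn. rewrite <- rsum_plus. reflexivity.
Qed.

Lemma csum_zero (f : nat -> C) n : (forall i, (i < n)%nat -> f i = 0%C) -> csum f n = 0%C.
Proof. induction n; intros H; simpl; auto. rewrite IHn, H by (intros; try apply H; lia). ring. Qed.

Lemma low_bound beta (hpos : forall n, 0 < beta n) h : is_multiplier beta h -> forall a,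
  exists c, 0 <= c /\ forall k (g : nat -> C), (forall n, (a < n)%nat -> g n = 0%C) ->
    N2 beta (cauchy_prod h g) k <= c * N2 beta g a.
Proof.
  intros [Ha Hm] a.
  set (e := fun i => spike i 1).
  set (E := fun i => Series (fun n => Cmod (cauchy_prod h (e i) n) ^ 2 * beta n)).
  assert (HeH : forall i, in_H2 beta (cauchy_prod h (e i))).
  { intros i. apply Hm. apply (spike_norm beta i 1). }
  assert (HE : forall i, 0 <= E i).
  { intros i. apply Series_nonneg. intros n; apply Rmult_le_pos; [apply pow2_ge_0| left; auto]. apply HeH. }
  exists (INR (S a) * rsum (fun i => E i / beta i) (S a)). split.
  { apply Rmult_le_pos. apply pos_INR. apply rsum_nonneg. intros i.
    apply Rmult_le_pos; auto. left; apply Rinv_0_lt_compat; auto. }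
  intros k g Hg.
  assert (Dec : forall n, cauchy_prod h g n = csum (fun i => g i * cauchy_prod h (e i) n)%C (S a)).
  { intros n. rewrite (cp_ext h g (fun m => csum (fun i => g i * e i m)%C (S a))).
    - rewrite cp_csum. apply csum_ext. intros i _. apply cp_scal.
    - intros m. destruct (le_lt_dec m a).
      + rewrite (csum_single _ m). unfold e, spike. rewrite Nat.eqb_refl. ring. lia.
        intros j _ Hj. unfold e, spike. destruct (Nat.eqb_spec m j). lia. ring.
      + rewrite Hg by lia. symmetry. apply csum_zero. intros i Hi. unfold e, spike.
        destruct (Nat.eqb_spec m i). lia. ring. }
  assert (Pt : forall n, Cmod (cauchy_prod h g n) ^ 2 <=
     INR (S a) * rsum (fun i => Cmod (g i) ^ 2 * Cmod (cauchy_prod h (e i) n) ^ 2) (S a)).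
  { intros n. rewrite Dec. eapply Rle_trans. apply pow_incr. split. apply Cmod_ge_0. apply Cmod_csum_le.
    eapply Rle_trans. apply sq_rsum. apply Req_le. f_equal. apply rsum_ext_eq. intros i _.
    rewrite Cmod_mult. ring. }
  unfold N2 at 1.
  apply Rle_trans with (rsum (fun n => INR (S a) * rsum (fun i => Cmod (g i) ^ 2 * Cmod (cauchy_prod h (e i) n) ^ 2) (S a) * beta n) (S k)).
  { apply rsum_le. intros n _. apply Rmult_le_compat_r. left; auto. apply Pt. }
  rewrite (rsum_ext_eq _ (fun n => INR (S a) * rsum (fun i => Cmod (g i) ^ 2 * (Cmod (cauchy_prod h (e i) n) ^ 2 * beta n)) (S a))).
  2:{ intros n _. rewrite Rmult_assoc. f_equal. rewrite Rmult_comm, <- rsum_scal. apply rsum_ext_eq. intros i _. ring. }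
  rewrite rsum_scal, rsum_switch. rewrite Rmult_assoc. apply Rmult_le_compat_l. apply pos_INR.
  rewrite (Rmult_comm (rsum _ _) (N2 _ _ _)).
  rewrite <- rsum_scal. apply rsum_le. intros i Hi.
  rewrite rsum_scal. fold (N2 beta (cauchy_prod h (e i)) k).
  assert (HN2 : N2 beta (cauchy_prod h (e i)) k <= E i) by (apply N2_le_series; auto).
  assert (Hgi : Cmod (g i) ^ 2 * beta i <= N2 beta g a).
  { apply (rsum_term_le (fun n => Cmod (g n) ^ 2 * beta n)). intros j. apply Rmult_le_pos. apply pow2_ge_0. left; auto. lia. }
  assert (Hgi' : Cmod (g i) ^ 2 <= N2 beta g a / beta i).
  { apply Rmult_le_reg_r with (beta i); auto. unfold Rdiv. rewrite Rmult_assoc, Rinv_l. lra. specialize (hpos i); lra. }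
  assert (0 <= N2 beta (cauchy_prod h (e i)) k) by (apply N2_nonneg; auto).
  apply Rle_trans with (N2 beta g a / beta i * E i).
  { apply Rmult_le_compat; auto. apply pow2_ge_0. }
  apply Req_le. unfold Rdiv. ring.
Qed.

Definition supp_le (g : nat -> C) k := forall n, (k < n)%nat -> g n = 0%C.

Definition UNB beta (h : nat -> C) := forall M, 0 < M -> exists k g, supp_le g k /\
  M * N2 beta g k < N2 beta (cauchy_prod h g) k.

Definition spec beta (h : nat -> C) (a : nat) (M t : R) (kg : nat * (nat -> C)) : Prop :=
  (forall n, (n <= a)%nat \/ (fst kg < n)%nat -> snd kg n = 0%C) /\
  N2 beta (snd kg) (fst kg) = t /\ M < N2 beta (cauchy_prod h (snd kg)) (fst kg).

Lemma sq_sum_le (u v : C) : Cmod (u + v)%C ^ 2 <= 2 * Cmod u ^ 2 + 2 * Cmod v ^ 2.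
Proof.
  pose proof (Cmod_triangle u v). pose proof (Cmod_ge_0 (u + v)%C).
  pose proof (Cmod_ge_0 u). pose proof (Cmod_ge_0 v).
  assert (Cmod (u + v)%C ^ 2 <= (Cmod u + Cmod v) ^ 2) by (apply pow_incr; lra).
  pose proof (pow2_ge_0 (Cmod u - Cmod v)). nra.
Qed.

Lemma pick beta (hpos : forall n, 0 < beta n) h : is_multiplier beta h -> UNB beta h ->
  forall a M t, 0 < t -> exists kg, spec beta h a M t kg.
Proof.
  intros Hm Hu a M t Ht.
  destruct (low_bound beta hpos h Hm a) as [c [Hc Hlow]].
  set (M' := (Rabs M + 1) / t).
  assert (HM' : 0 < M') by (unfold M'; apply Rdiv_lt_0_compat; auto; pose proof (Rabs_pos M); lra).
  destruct (Hu (2 * c + 2 * M') ltac:(lra)) as [k [g [Hs Hbig]]].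
  set (gl := (fun n => if Nat.leb n a then g n else RtoC 0) : nat -> C).
  set (gh := (fun n => if Nat.leb n a then RtoC 0 else g n) : nat -> C).
  assert (Hsplit : forall n, cauchy_prod h g n = (cauchy_prod h gl n + cauchy_prod h gh n)%C).
  { intros n. rewrite <- cp_plus. apply cp_ext. intros m. unfold gl, gh. destruct (Nat.leb m a); ring. }
  assert (H1 : N2 beta (cauchy_prod h g) k <= 2 * N2 beta (cauchy_prod h gl) k + 2 * N2 beta (cauchy_prod h gh) k).
  { unfold N2. rewrite <- !rsum_scal, <- rsum_plus. apply rsum_le. intros n _. rewrite Hsplit.
    pose proof (sq_sum_le (cauchy_prod h gl n) (cauchy_prod h gh n)). pose proof (hpos n). nra. }
  assert (H2 : N2 beta (cauchy_prod h gl) k <= c * N2 beta g k).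
  { apply Rle_trans with (c * N2 beta gl a). apply (Hlow k gl). intros n Hn. unfold gl. destruct (Nat.leb_spec n a). lia. reflexivity.
    apply Rmult_le_compat_l; auto.
    rewrite (N2_ext beta gl g a). 2:{ intros n Hn. unfold gl. destruct (Nat.leb_spec n a). reflexivity. lia. }
    rewrite <- (N2_supp beta g k (Nat.max a k)) by (auto || lia). apply N2_mono; auto; lia. }
  assert (H3 : N2 beta gh k <= N2 beta g k).
  { unfold N2. apply rsum_le. intros n _. apply Rmult_le_compat_r. left; auto. unfold gh.
    destruct (Nat.leb n a). rewrite Cmod_0. simpl. apply pow2_ge_0 || nra. lra. }
  assert (HgN : 0 <= N2 beta g k) by (apply N2_nonneg; auto).
  assert (H4 : M' * N2 beta g k < N2 beta (cauchy_prod h gh) k).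
  { assert (c * N2 beta g k >= 0) by (apply Rle_ge, Rmult_le_pos; auto). nra. }
  set (G := N2 beta gh k) in *.
  assert (HG : 0 < G).
  { assert (0 <= G) by (apply N2_nonneg; auto). destruct (Req_dec G 0) as [E|E]; [|lra].
    exfalso. assert (Z : forall n, gh n = 0%C).
    { intros n. destruct (le_lt_dec n k). apply (N2_zero beta gh k hpos E); auto.
      unfold gh. rewrite Hs by lia. destruct (Nat.leb n a); reflexivity. }
    assert (N2 beta (cauchy_prod h gh) k = 0).
    { unfold N2. rewrite <- (Rmult_0_r (INR (S k))), <- rsum_const. apply rsum_ext_eq. intros n _.
      rewrite cp_zero, Cmod_0 by auto. ring. }
    assert (0 <= M' * N2 beta g k) by (apply Rmult_le_pos; lra). lra. }
  set (sg := sqrt (t / G)).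
  assert (Hsg : sg ^ 2 = t / G) by (apply pow2_sqrt; apply Rlt_le, Rdiv_lt_0_compat; auto).
  exists (k, fun n => (RtoC sg * gh n)%C). repeat split; simpl.
  - intros n [Hn|Hn]; unfold gh.
    + destruct (Nat.leb_spec n a). ring. lia.
    + rewrite Hs by lia. destruct (Nat.leb n a); ring.
  - rewrite N2_scal. fold G. rewrite Hsg. field. lra.
  - rewrite (N2_ext beta _ (fun n => (RtoC sg * cauchy_prod h gh n)%C)) by (intros; apply cp_scal).
    rewrite N2_scal, Hsg.
    assert (M' * G <= M' * N2 beta g k) by (apply Rmult_le_compat_l; lra).
    assert (t / G * (M' * G) < t / G * N2 beta (cauchy_prod h gh) k).
    { apply Rmult_lt_compat_l. apply Rdiv_lt_0_compat; auto. lra. }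
    replace (t / G * (M' * G)) with (Rabs M + 1) in H0 by (unfold M'; field; lra).
    pose proof (Rle_abs M). lra.
Qed.

Definition choose_kg beta h a M t : nat * (nat -> C) :=
  epsilon (inhabits ((0%nat, fun _ : nat => RtoC 0) : nat * (nat -> C))) (spec beta h a M t).

Definition Lof beta (h p : nat -> C) := Series (fun n => Cmod (cauchy_prod h p n) ^ 2 * beta n).

Fixpoint st beta h (J : nat) : nat * (nat -> C) :=
  match J with
  | O => (O, fun _ => RtoC 0)
  | S J => (Nat.max (fst (choose_kg beta h (fst (st beta h J)) (2 * (Lof beta h (snd (st beta h J)) + INR J)) ((/2) ^ J)))
                    (S (fst (st beta h J))),
            fun n => (snd (st beta h J) n +
                      snd (choose_kg beta h (fst (st beta h J)) (2 * (Lof beta h (snd (st beta h J)) + INR J)) ((/2) ^ J)) n)%C)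
  end.

Lemma Cmod2_disj (u v : C) : u = 0%C \/ v = 0%C -> Cmod (u + v)%C ^ 2 = Cmod u ^ 2 + Cmod v ^ 2.
Proof.
  intros [->| ->]; rewrite ?Cplus_0_l, ?Cplus_0_r, Cmod_0; simpl; ring.
Qed.

Lemma fin_in_H2 beta (p : nat -> C) a : supp_le p a -> in_H2 beta p.
Proof.
  intros H. apply (fin_ex_series_R _ a). intros n Hn. rewrite H, Cmod_0 by lia. simpl. ring.
Qed.

Lemma hump beta (hpos : forall n, 0 < beta n) h : is_multiplier beta h -> UNB beta h -> False.
Proof.
  intros Hm Hu.
  set (a := fun J => fst (st beta h J)).
  set (p := fun J => snd (st beta h J)).
  set (kg := fun J => choose_kg beta h (a J) (2 * (Lof beta h (p J) + INR J)) ((/2) ^ J)).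
  assert (PK : forall J, spec beta h (a J) (2 * (Lof beta h (p J) + INR J)) ((/2) ^ J) (kg J)).
  { intros J. unfold kg, choose_kg. apply epsilon_spec. apply (pick beta hpos h Hm Hu).
    apply pow_lt. lra. }
  assert (Ea : forall J, a (S J) = Nat.max (fst (kg J)) (S (a J))) by reflexivity.
  assert (Ep : forall J n, p (S J) n = (p J n + snd (kg J) n)%C) by reflexivity.
  assert (I1 : forall J, supp_le (p J) (a J)).
  { induction J; intros n Hn.
    - reflexivity.
    - rewrite Ep. rewrite Ea in Hn. rewrite IHJ by lia.
      destruct (PK J) as [S1 _]. rewrite S1 by lia. ring. }
  assert (I3 : forall J, (J <= a J)%nat).
  { induction J. lia. rewrite Ea. lia. }
  assert (I5 : forall J J', (J <= J')%nat -> (a J <= a J')%nat).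
  { intros J J' H. induction H. lia. rewrite Ea. lia. }
  assert (I2 : forall J, N2 beta (p J) (a J) = 2 - 2 * (/2) ^ J).
  { induction J.
    - unfold N2, p, a. cbn [st fst snd rsum]. rewrite Cmod_0. simpl. field.
    - destruct (PK J) as [S1 [S2 _]].
      rewrite (N2_ext beta (p (S J)) (fun n => (p J n + snd (kg J) n)%C)) by (intros; apply Ep).
      unfold N2. rewrite (rsum_ext_eq _ (fun n => Cmod (p J n) ^ 2 * beta n + Cmod (snd (kg J) n) ^ 2 * beta n)).
      2:{ intros n _. rewrite Cmod2_disj. ring. destruct (le_lt_dec n (a J)).
          right. apply S1; lia. left. apply I1; lia. }
      rewrite rsum_plus. fold (N2 beta (p J) (a (S J))). fold (N2 beta (snd (kg J)) (a (S J))).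
      rewrite (N2_supp beta (p J) (a J)) by (exact (I1 J) || (rewrite Ea; lia)).
      rewrite (N2_supp beta (snd (kg J)) (fst (kg J))) by ((intros; apply S1; lia) || (rewrite Ea; lia)).
      rewrite IHJ, S2. simpl. field. }
  assert (I4 : forall J J', (J <= J')%nat -> forall n, (n <= a J)%nat -> p J' n = p J n).
  { intros J J' H. induction H; intros n Hn. reflexivity.
    rewrite Ep, IHle by auto. destruct (PK m) as [S1 _].
    rewrite S1. ring. left. pose proof (I5 J m H). lia. }
  set (f := fun n => p n n).
  assert (I6 : forall J n, (n <= a J)%nat -> f n = p J n).
  { intros J n Hn. unfold f. destruct (le_lt_dec J n).
    - apply (I4 J n); auto.
    - symmetry. apply (I4 n J). lia. apply I3. }
  assert (Hf : in_H2 beta f).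
  { apply (series_bounded _ 2).
    - intros n. apply Rmult_le_pos. apply pow2_ge_0. left; auto.
    - intros K. rewrite rsum_sum_n. fold (N2 beta f K).
      rewrite (N2_ext beta f (p K)) by (intros n Hn; apply I6; pose proof (I3 K); lia).
      eapply Rle_trans. apply (N2_mono beta (p K) K (a K) hpos (I3 K)). rewrite I2.
      assert (0 < (/2) ^ K) by (apply pow_lt; lra). lra. }
  destruct Hm as [Ha Hmul].
  pose proof (Hmul f Hf) as Hhf.
  set (L := Series (fun n => Cmod (cauchy_prod h f n) ^ 2 * beta n)).
  assert (HL : 0 <= L).
  { apply Series_nonneg; auto. intros n. apply Rmult_le_pos. apply pow2_ge_0. left; auto. }
  destruct (nfloor_ex L HL) as [J0 [_ HJ0]].
  set (J := S J0).
  assert (HJ : L < INR J) by (unfold J; rewrite S_INR; lra).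
  destruct (PK J) as [S1 [S2 S3]].
  set (k := fst (kg J)) in *. set (g := snd (kg J)) in *.
  assert (Hk : (k <= a (S J))%nat) by (rewrite Ea; lia).
  assert (E1 : N2 beta (cauchy_prod h f) k = N2 beta (cauchy_prod h (fun n => p J n + g n)%C) k).
  { apply N2_ext. intros n Hn. apply (cauchy_prod_local h f _ (a (S J))).
    intros m Hm. rewrite (I6 (S J) m Hm). apply Ep. lia. }
  assert (HpJ : in_H2 beta (cauchy_prod h (p J))) by (apply Hmul; apply (fin_in_H2 beta _ (a J)); auto).
  assert (E2 : N2 beta (cauchy_prod h (p J)) k <= Lof beta h (p J)) by (apply N2_le_series; auto).
  assert (E3 : N2 beta (cauchy_prod h g) k <= 2 * N2 beta (cauchy_prod h (fun n => p J n + g n)%C) k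
                 + 2 * N2 beta (cauchy_prod h (p J)) k).
  { unfold N2. rewrite <- !rsum_scal, <- rsum_plus. apply rsum_le. intros n _. rewrite cp_plus.
    pose proof (sq_sum_le (cauchy_prod h (p J) n + cauchy_prod h g n)%C (- cauchy_prod h (p J) n)%C).
    replace (cauchy_prod h (p J) n + cauchy_prod h g n + - cauchy_prod h (p J) n)%C with (cauchy_prod h g n) in H by ring.
    rewrite Cmod_opp in H. pose proof (hpos n). nra. }
  assert (E4 : N2 beta (cauchy_prod h f) k <= L) by (apply N2_le_series; auto).
  lra.
Qed.

Lemma mult_bounded beta (hpos : forall n, 0 < beta n) h : is_multiplier beta h ->
  exists M, 0 < M /\ forall f, in_H2 beta f ->
    Series (fun n => Cmod (cauchy_prod h f n) ^ 2 * beta n) <= M * Series (fun n => Cmod (f n) ^ 2 * beta n).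
Proof.
  intros Hm.
  destruct (classic (exists M, 0 < M /\ forall k g, supp_le g k ->
      N2 beta (cauchy_prod h g) k <= M * N2 beta g k)) as [[M [HM H]]|Hn].
  - exists M. split; auto. intros f Hf.
    apply series_bounded.
    + intros n. apply Rmult_le_pos. apply pow2_ge_0. left; auto.
    + intros K. rewrite rsum_sum_n. fold (N2 beta (cauchy_prod h f) K).
      assert (Hc : forall m, (m <= K)%nat -> f m = cut K f m).
      { intros m Hm'. unfold cut. destruct (Nat.leb_spec m K); [reflexivity| lia]. }
      rewrite (N2_ext beta _ (cauchy_prod h (cut K f))) by (intros; apply (cauchy_prod_local h f _ K); auto).
      eapply Rle_trans. apply H. intros n Hn. unfold cut. destruct (Nat.leb_spec n K). lia. reflexivity.
      apply Rmult_le_compat_l. lra.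
      rewrite <- (N2_ext beta f (cut K f) K) by auto. apply N2_le_series; auto.
  - exfalso. apply (hump beta hpos h Hm).
    intros M HM. apply NNPP. intros Hc. apply Hn. exists M. split; auto.
    intros k g Hs. apply Rnot_lt_le. intros Hlt. apply Hc. exists k, g. auto.
Qed.

Lemma multiplier_Hinf beta (hpos : forall n, 0 < beta n)
  (hliminf : Rbar_le (Finite 1) (LimInf_seq (fun n => Rpower (beta n) (/ INR n)))) h :
  is_multiplier beta h -> in_Hinf h.
Proof.
  intros Hm. destruct (mult_bounded beta hpos h Hm) as [M [HM HB]].
  split. apply Hm. exists (sqrt M). intros z l Hz Hl.
  refine (sup_bound beta hpos hliminf h (sqrt M) (proj1 Hm) (sqrt_lt_R0 _ HM) _ z l Hz Hl).
  intros f Hf H1. split. apply Hm; auto.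
  rewrite pow2_sqrt by lra. eapply Rle_trans. apply HB; auto. nra.
Qed.

Lemma sup_finite h : in_Hinf h -> exists S, sup_norm h = Finite S /\ 0 <= S /\
  forall z l, Cmod z < 1 -> value_at h z l -> Cmod l <= S.
Proof.
  intros [Ha [M HM]].
  destruct (Ha 0%C) as [l0 Hl0]. rewrite Cmod_0; lra.
  unfold sup_norm.
  set (E := fun x => exists z l, Cmod z < 1 /\ value_at h z l /\ x = Cmod l).
  destruct (Lub_Rbar_correct E) as [Hub Hlst].
  assert (E0 : E (Cmod l0)). { exists 0%C, l0. rewrite Cmod_0. repeat split; auto; lra. }
  assert (Hup : Rbar_le (Lub_Rbar E) M).
  { apply Hlst. intros x [z [l [Hz [Hl ->]]]]. simpl. eauto. }
  pose proof (Hub _ E0) as Hlo.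
  destruct (Lub_Rbar E) as [S| |] eqn:ES; simpl in Hup, Hlo; try contradiction.
  exists S. split; auto. split. pose proof (Cmod_ge_0 l0). lra.
  intros z l Hz Hl. assert (E (Cmod l)) by (exists z, l; auto). pose proof (Hub _ H). simpl in H0. exact H0.
Qed.

Lemma is_series_zero_R : is_series (fun _ : nat => 0) 0.
Proof.
  pose proof (is_series_finite (K := R_AbsRing) (V := R_NormedModule) (fun _ : nat => 0) 0 (fun _ _ => eq_refl)) as T.
  rewrite sum_O in T. exact T.
Qed.

Lemma Series_zero_R : Series (fun _ : nat => 0) = 0.
Proof. apply is_series_unique. apply is_series_zero_R. Qed.

Lemma le_of_all_gt x y : (forall M, y < M -> x <= M) -> x <= y.
Proof. intros H. apply Rnot_lt_le. intros Hlt. pose proof (H ((x + y) / 2) ltac:(lra)). lra. Qed.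

Lemma dirB beta (hpos : forall n, 0 < beta n)
  (hliminf : Rbar_le (Finite 1) (LimInf_seq (fun n => Rpower (beta n) (/ INR n)))) :
  ess_decreasing beta ->
  ((forall h : nat -> C, is_multiplier beta h <-> in_Hinf h) /\
   exists Cst : R, 0 < Cst /\
     forall h : nat -> C, in_Hinf h ->
       Rbar_le (sup_norm h) (mult_norm beta h) /\
       Rbar_le (mult_norm beta h) (Rbar_mult (Finite Cst) (sup_norm h))).
Proof.
  intros [C0 [HC1 HC]].
  assert (MB : forall h, in_Hinf h -> exists S, sup_norm h = Finite S /\ 0 <= S /\
     (forall z l, Cmod z < 1 -> value_at h z l -> Cmod l <= S) /\
     forall f, in_H2 beta f -> in_H2 beta (cauchy_prod h f) /\
       Series (fun n => Cmod (cauchy_prod h f n) ^ 2 * beta n) <= C0 * S ^ 2 * Series (fun n => Cmod (f n) ^ 2 * beta n)).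
  { intros h Hi. destruct (sup_finite h Hi) as [S [ES [HS Hb]]]. exists S. repeat split; auto.
    - apply (mult_bound beta hpos C0 HC h S (proj1 Hi) HS Hb f H).
    - apply (mult_bound beta hpos C0 HC h S (proj1 Hi) HS Hb f H). }
  split.
  - intros h. split.
    + apply multiplier_Hinf; auto.
    + intros Hi. destruct (MB h Hi) as [S [_ [_ [_ Hf]]]]. split. apply Hi. intros f H. apply Hf; auto.
  - exists (sqrt C0). split. apply sqrt_lt_R0; lra.
    intros h Hi. destruct (MB h Hi) as [S [ES [HS [Hb Hf]]]]. rewrite ES.
    set (F := fun x => exists f, in_H2 beta f /\ H2_norm beta f <= 1 /\ x = H2_norm beta (cauchy_prod h f)).
    assert (Hfn : forall f, in_H2 beta f -> H2_norm beta f <= 1 -> Series (fun n => Cmod (f n) ^ 2 * beta n) <= 1).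
    { intros f Hin Hn. unfold H2_norm in Hn.
      assert (0 <= Series (fun n => Cmod (f n) ^ 2 * beta n)).
      { apply Series_nonneg; auto. intros n; apply Rmult_le_pos; [apply pow2_ge_0| left; auto]. }
      rewrite <- (pow2_sqrt (Series _)) by auto. rewrite <- (pow1 2). apply pow_incr. split; auto. apply sqrt_pos. }
    assert (Hser0 : forall f, in_H2 beta f -> 0 <= Series (fun n => Cmod (f n) ^ 2 * beta n)).
    { intros f Hin. apply Series_nonneg; auto. intros n; apply Rmult_le_pos; [apply pow2_ge_0| left; auto]. }
    unfold mult_norm. fold F.
    destruct (Lub_Rbar_correct F) as [Hub Hlst].
    assert (F0 : F 0).
    { exists (fun _ => RtoC 0).
      assert (Z1 : forall n, Cmod (RtoC 0) ^ 2 * beta n = 0) by (intros; rewrite Cmod_0; simpl; ring).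
      assert (Z2 : forall n, Cmod (cauchy_prod h (fun _ => RtoC 0) n) ^ 2 * beta n = 0).
      { intros n. rewrite cp_zero by reflexivity. apply Z1. }
      repeat split.
      - exists 0. eapply is_series_ext. intros n; symmetry; apply Z1. apply is_series_zero_R.
      - unfold H2_norm. rewrite (Series_ext _ _ Z1), Series_zero_R, sqrt_0. lra.
      - unfold H2_norm. rewrite (Series_ext _ _ Z2), Series_zero_R, sqrt_0. reflexivity. }
    assert (Fb : forall x, F x -> x <= sqrt C0 * S).
    { intros x [f [Hin [Hn ->]]]. destruct (Hf f Hin) as [_ Hs]. pose proof (Hfn f Hin Hn).
      unfold H2_norm. rewrite <- (sqrt_pow2 S) by auto. rewrite <- sqrt_mult_alt by lra.
      apply sqrt_le_1_alt. eapply Rle_trans. exact Hs.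
      rewrite <- (Rmult_1_r (C0 * S ^ 2)) at 2. apply Rmult_le_compat_l; auto.
      apply Rmult_le_pos. lra. apply pow2_ge_0. }
    split.
    - pose proof (Hub _ F0) as H0.
      destruct (Lub_Rbar F) as [M0| |] eqn:EF; simpl in H0; try contradiction; simpl; auto.
      unfold sup_norm in ES.
      set (E := fun x => exists z l, Cmod z < 1 /\ value_at h z l /\ x = Cmod l) in ES.
      destruct (Lub_Rbar_correct E) as [_ HlE]. rewrite ES in HlE. apply (HlE (Finite M0)).
      intros x [z [l [Hz [Hl ->]]]]. simpl. apply le_of_all_gt. intros M HM.
      refine (sup_bound beta hpos hliminf h M (proj1 Hi) ltac:(lra) _ z l Hz Hl).
      intros f Hin Hs1. destruct (Hf f Hin) as [Hc _]. split; auto.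
      assert (Fx : F (H2_norm beta (cauchy_prod h f))).
      { exists f. repeat split; auto. unfold H2_norm. rewrite <- sqrt_1. apply sqrt_le_1_alt. auto. }
      pose proof (Hub _ Fx) as Hx. simpl in Hx. unfold H2_norm in Hx.
      pose proof (Hser0 _ Hc).
      rewrite <- (pow2_sqrt (Series _)) by auto. apply pow_incr. split. apply sqrt_pos. lra.
    - apply Hlst. intros x Hx. simpl. apply Fb; auto.
Qed.


Theorem mainTheorem16 (beta : nat -> R)
  (hpos : forall n, 0 < beta n)
  (hliminf : Rbar_le (Finite 1) (LimInf_seq (fun n => Rpower (beta n) (/ INR n)))) :
  ((forall h : nat -> C, is_multiplier beta h <-> in_Hinf h) /\
   exists Cst : R, 0 < Cst /\
     forall h : nat -> C, in_Hinf h ->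
       Rbar_le (sup_norm h) (mult_norm beta h) /\
       Rbar_le (mult_norm beta h) (Rbar_mult (Finite Cst) (sup_norm h)))
  <-> ess_decreasing beta.
Proof.
  split.
  - intros [_ H2]. apply dirA; auto.
  - intros H. apply dirB; auto.
Qed.
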